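(* Let $m\in\mathbb{N}$ and let $V_{n}(x)$, $n\in\mathbb{N}$, and $V(x)$ be 1-periodic complex-valued distributions in the Sobolev space $H_{+}^{-m}$ such that $V_{n}\to V$ in $H_{+}^{-m}$ as $n\to\infty$. Then the operators \[ S_{\pm}^{(n)}\equiv S_{\pm}(V_{n}):=D_{\pm}^{2m}\dotplus V_{n}(x),\qquad \mathrm{Dom}(S_{\pm}^{(n)})=\{u\in H_{\pm}^{m}\,|\,D_{\pm}^{2m}u+V_{n}(x)u\in L_{2}(0,1)\}, \] converge to the operators \[ S_{\pm}\equiv S_{\pm}(V)=D_{\pm}^{2m}\dotplus V(x),\qquad \mathrm{Dom}(S_{\pm})=\{u\in H_{\pm}^{m}\,|\,D_{\pm}^{2m}u+V(x)u\in L_{2}(0,1)\}, \] in the generalized convergence sense for closed operators (convergence in the gap metric between closed operators, as in Kato's Perturbation Theory for Linear Operators).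
   Context: Work in the Hilbert space $L_{2}(0,1)$. For $s\in\mathbb{R}$, $H_{+}^{s}$ (resp. $H_{-}^{s}$) is the Sobolev space of 1-periodic (resp. 1-semiperiodic) functions/distributions $f=\sum_{k\in\mathbb{Z}}\widehat f(2k)e^{i2k\pi x}$ (resp. $f=\sum_{k}\widehat f(2k+1)e^{i(2k+1)\pi x}$) with norm $\big(\sum_k\langle 2k\rangle^{2s}|\widehat f(2k)|^2\big)^{1/2}$ (resp. $\big(\sum_k\langle 2k+1\rangle^{2s}|\widehat f(2k+1)|^2\big)^{1/2}$), $\langle k\rangle=1+|k|$. $D_{\pm}=-i\,d/dx$ with domain $H_{\pm}^{1}$, $D_{\pm}^{2m}:=|D_{\pm}|^{2m}$ with domain $H_{\pm}^{2m}$. $\langle\cdot,\cdot\rangle_{\pm}$ is the pairing between $H_{\pm}^{s}$ and $H_{\pm}^{-s}$ extending the $L_2(0,1)$ inner product. For $V\in H_{+}^{-m}$ the form-sum $S_{\pm}(V)=D_{\pm}^{2m}\dotplus V(x)$ is the m-sectorial operator associated (first representation theorem) with the closed densely defined sectorial form $t_{\pm}[u,v]=\langle D_{\pm}^{2m}u,v\rangle_{\pm}+\langle V(x)u,v\rangle_{\pm}$, $\mathrm{Dom}(t_{\pm})=H_{\pm}^{m}$; here $V(x)u$ is the formal product of Fourier series, which converges in $H_{\pm}^{-m}$ for $u\in H_{\pm}^{m}$ by the convolution lemma. *)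

(* Defs.v *)
From Stdlib Require Import Reals ZArith.
From Coquelicot Require Import Coquelicot.
Open Scope R_scope.

(* Everything is expressed through Fourier coefficients.  A function/distribution
   in H^s_+ (resp. H^s_-) is encoded by u : Z -> C, where u k is the coefficient
   \hat f(2k) (resp. \hat f(2k+1)).  The map f |-> (u k)_k is a unitary
   isomorphism L2(0,1) -> l2(Z) in both cases (e^{i2k pi x}, resp.
   e^{i(2k+1) pi x}, is an orthonormal basis of L2(0,1)). *)

Definition sumZ (f : Z -> R) : R :=
  Series (fun n => f (Z.of_nat n)) + Series (fun n => f (- Z.of_nat (S n))%Z).

Definition ex_sumZ (f : Z -> R) : Prop :=
  ex_series (fun n => f (Z.of_nat n)) /\ ex_series (fun n => f (- Z.of_nat (S n))%Z).

Definition sumZC (f : Z -> C) : C :=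
  (sumZ (fun k => Re (f k)), sumZ (fun k => Im (f k))).

(* b = true : periodic case (+), frequency 2k ; b = false : semiperiodic (-), 2k+1 *)
Definition freq (b : bool) (k : Z) : R :=
  if b then IZR (2 * k) else IZR (2 * k + 1).

Definition jbr (x : R) : R := 1 + Rabs x.

Definition sob_terms (b : bool) (s : Z) (u : Z -> C) : Z -> R :=
  fun k => powerRZ (jbr (freq b k)) (2 * s) * (Cmod (u k)) ^ 2.

Definition in_H (b : bool) (s : Z) (u : Z -> C) : Prop := ex_sumZ (sob_terms b s u).

Definition H_norm (b : bool) (s : Z) (u : Z -> C) : R := sqrt (sumZ (sob_terms b s u)).

Definition in_L2 (u : Z -> C) : Prop := ex_sumZ (fun k => (Cmod (u k)) ^ 2).

(* Fourier coefficients of the product V(x) u(x), V 1-periodic: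
   (Vu)^(nu_k) = sum_j \hat V(2j) \hat u(nu_k - 2j) = sum_j V j * u (k - j). *)
Definition conv (V u : Z -> C) (k : Z) : C := sumZC (fun j => Cmult (V j) (u (k - j)%Z)).

(* symbol of D^{2m} = |D|^{2m}, D = -i d/dx, on e^{i nu pi x} : (nu pi)^{2m} *)
Definition symb (b : bool) (m : nat) (k : Z) : R := (freq b k * PI) ^ (2 * m).

Definition S_graph (b : bool) (m : nat) (V : Z -> C) (u f : Z -> C) : Prop :=
  in_H b (Z.of_nat m) u /\ in_L2 f /\
  forall k, f k = Cplus (Cmult (RtoC (symb b m k)) (u k)) (conv V u k).

Definition graph_norm (u f : Z -> C) : R :=
  sqrt (sumZ (fun k => (Cmod (u k)) ^ 2) + sumZ (fun k => (Cmod (f k)) ^ 2)).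

Definition graph_dist (u f w g : Z -> C) : R :=
  graph_norm (fun k => Cminus (u k) (w k)) (fun k => Cminus (f k) (g k)).

(* Kato's delta(M, N) <= eps :  sup_{x in M, |x| = 1} dist(x, N) <= eps *)
Definition delta_le (M N : (Z -> C) -> (Z -> C) -> Prop) (eps : R) : Prop :=
  forall u f, M u f -> graph_norm u f = 1 ->
    forall eta, 0 < eta -> exists w g, N w g /\ graph_dist u f w g < eps + eta.

(* generalized convergence (Kato IV.2.4): hat-delta(G(T_n), G(T)) -> 0 *)
Definition gen_conv (T : nat -> (Z -> C) -> (Z -> C) -> Prop)
    (T0 : (Z -> C) -> (Z -> C) -> Prop) : Prop :=
  forall eps, 0 < eps -> exists N : nat, forall n, (N <= n)%nat ->
    delta_le (T n) T0 eps /\ delta_le T0 (T n) eps.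

(* Main.v *)
Require Import Defs.
From Stdlib Require Import Reals ZArith.
From Coquelicot Require Import Coquelicot.
From Stdlib Require Import Lra Lia List Psatz FunctionalExtensionality FinFun.
Open Scope R_scope.


Lemma ser_bound (a : nat -> R) (M : R) :
  (forall n, 0 <= a n) -> (forall N, sum_n a N <= M) -> ex_series a /\ Series a <= M.
Proof.
  intros Ha HM.
  assert (Hinc : forall n, sum_n a n <= sum_n a (S n)).
  { intro n. rewrite sum_Sn. unfold plus; simpl. specialize (Ha (S n)). lra. }
  destruct (ex_finite_lim_seq_incr _ M Hinc HM) as [l Hl].
  assert (Hs : is_series a l) by exact Hl.
  split. exists l; exact Hs.
  rewrite (is_series_unique _ _ Hs).
  assert (Hc : is_lim_seq (fun _ => M) M) by apply is_lim_seq_const.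
  pose proof (is_lim_seq_le _ _ _ _ HM Hl Hc) as H. simpl in H. exact H.
Qed.

Lemma sum_n_mono (a : nat -> R) : (forall n, 0 <= a n) ->
  forall N k, sum_n a N <= sum_n a (N + k).
Proof.
  intros Ha N k. induction k. rewrite Nat.add_0_r; lra.
  rewrite Nat.add_succ_r, sum_Sn. unfold plus; simpl. specialize (Ha (S (N+k))). lra.
Qed.

Lemma sum_n_le_Series (a : nat -> R) N : (forall n, 0 <= a n) -> ex_series a ->
  sum_n a N <= Series a.
Proof.
  intros Ha [l Hl].
  rewrite (is_series_unique _ _ Hl).
  assert (Hl' : is_lim_seq (sum_n a) l) by exact Hl.
  assert (Hc : is_lim_seq (fun _ => sum_n a N) (sum_n a N)) by apply is_lim_seq_const.
  assert (H := is_lim_seq_le_loc (fun _ => sum_n a N) (sum_n a) (sum_n a N) l).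
  simpl in H. apply H; auto.
  exists N. intros n Hn. replace n with (N + (n - N))%nat by lia. apply sum_n_mono; auto.
Qed.

Lemma Series_nonneg (a : nat -> R) : (forall n, 0 <= a n) -> ex_series a -> 0 <= Series a.
Proof.
  intros Ha He. eapply Rle_trans; [|apply (sum_n_le_Series a 0); auto].
  rewrite sum_O. auto.
Qed.

Fixpoint lsum (f : Z -> R) (l : list Z) : R :=
  match l with nil => 0 | x :: l' => f x + lsum f l' end.

Lemma lsum_app f l1 l2 : lsum f (l1 ++ l2) = lsum f l1 + lsum f l2.
Proof. induction l1; simpl; lra. Qed.

Lemma lsum_map f g l : lsum f (map g l) = lsum (fun x => f (g x)) l.
Proof. induction l; simpl; congruence. Qed.

Lemma lsum_nonneg f l : (forall k, 0 <= f k) -> 0 <= lsum f l.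
Proof. intros H; induction l; simpl. lra. specialize (H a); lra. Qed.

Lemma lsum_le f g l : (forall k, f k <= g k) -> lsum f l <= lsum g l.
Proof. intros H; induction l; simpl. lra. specialize (H a); lra. Qed.

Lemma lsum_plus f g l : lsum (fun k => f k + g k) l = lsum f l + lsum g l.
Proof. induction l; simpl; lra. Qed.

Lemma lsum_scal c f l : lsum (fun k => c * f k) l = c * lsum f l.
Proof. induction l; simpl; lra. Qed.

Lemma lsum_remove f x L : (forall k, 0 <= f k) -> In x L ->
  f x + lsum f (remove Z.eq_dec x L) <= lsum f L.
Proof.
  intros Hf. induction L as [|y L IH]; simpl. tauto.
  intros [<-|Hin].
  - destruct (Z.eq_dec y y) as [_|n]; [|congruence].
    assert (H: lsum f (remove Z.eq_dec y L) <= lsum f L).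
    { clear IH. induction L as [|z L IH2]; simpl. lra.
      destruct (Z.eq_dec y z). specialize (Hf z); lra. simpl; lra. }
    lra.
  - destruct (Z.eq_dec x y) as [->|n].
    + assert (H: lsum f (remove Z.eq_dec y L) <= lsum f L).
      { clear IH Hin. induction L as [|z L IH2]; simpl. lra.
        destruct (Z.eq_dec y z). specialize (Hf z); lra. simpl; lra. }
      specialize (Hf y); lra.
    + simpl. specialize (IH Hin). lra.
Qed.

Lemma lsum_sub f l L : (forall k, 0 <= f k) -> NoDup l -> incl l L -> lsum f l <= lsum f L.
Proof.
  intros Hf Hl. revert L. induction Hl as [|x l Hx Hl IH]; intros L Hinc; simpl.
  - apply lsum_nonneg; auto.
  - assert (HxL : In x L) by (apply Hinc; left; auto).
    pose proof (lsum_remove f x L Hf HxL).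
    assert (lsum f l <= lsum f (remove Z.eq_dec x L)).
    { apply IH. intros y Hy. apply in_in_remove. intro; subst; tauto. apply Hinc; right; auto. }
    lra.
Qed.

Definition wl (N : nat) : list Z :=
  map Z.of_nat (seq 0 N) ++ map (fun n => (- Z.of_nat (S n))%Z) (seq 0 N).

Fixpoint nsum (a : nat -> R) (N : nat) : R :=
  match N with O => 0 | S N' => nsum a N' + a N' end.

Lemma nsum_sum_n a N : nsum a (S N) = sum_n a N.
Proof.
  induction N. simpl. rewrite sum_O. lra.
  rewrite sum_Sn. unfold plus; simpl. simpl in IHN. rewrite <- IHN. lra.
Qed.

Lemma lsum_seq f g N : lsum f (map g (seq 0 N)) = nsum (fun n => f (g n)) N.
Proof.
  induction N. reflexivity.
  rewrite seq_S, map_app, lsum_app. simpl. rewrite IHN. lra.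
Qed.

Definition posf (f : Z -> R) := fun n : nat => f (Z.of_nat n).
Definition negf (f : Z -> R) := fun n : nat => f (- Z.of_nat (S n))%Z.

Lemma lsum_wl f N : lsum f (wl N) = nsum (posf f) N + nsum (negf f) N.
Proof. unfold wl. rewrite lsum_app, !lsum_seq. reflexivity. Qed.

Lemma wl_NoDup N : NoDup (wl N).
Proof.
  unfold wl. apply NoDup_app.
  - apply FinFun.Injective_map_NoDup. intros x y H; lia. apply seq_NoDup.
  - apply FinFun.Injective_map_NoDup. intros x y H; lia. apply seq_NoDup.
  - intros x H1 H2. apply in_map_iff in H1, H2.
    destruct H1 as [a [Ha _]]; destruct H2 as [c [Hc _]]. lia.
Qed.

Lemma in_wl N x : (Z.abs x < Z.of_nat N)%Z -> In x (wl N).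
Proof.
  intro H. unfold wl. apply in_or_app. destruct (Z_le_dec 0 x).
  - left. apply in_map_iff. exists (Z.to_nat x). split. lia. apply in_seq. lia.
  - right. apply in_map_iff. exists (Z.to_nat (- x - 1)). split. lia. apply in_seq. lia.
Qed.

Lemma in_wl_abs N x : In x (wl N) -> (Z.abs x <= Z.of_nat N)%Z.
Proof.
  unfold wl. intro H. apply in_app_or in H. destruct H as [H|H];
  apply in_map_iff in H; destruct H as [n [<- Hn]]; apply in_seq in Hn; lia.
Qed.

Lemma nsum_nonneg a N : (forall n, 0 <= a n) -> 0 <= nsum a N.
Proof. intro H; induction N; simpl. lra. specialize (H N); lra. Qed.

Definition nn (f : Z -> R) := forall k, 0 <= f k.

Lemma sumZ_bound f M : nn f -> (forall N, lsum f (wl N) <= M) -> ex_sumZ f /\ sumZ f <= M.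
Proof.
  intros Hf HM.
  assert (Hp : forall n, 0 <= posf f n) by (intro; apply Hf).
  assert (Hn : forall n, 0 <= negf f n) by (intro; apply Hf).
  assert (B1 : forall N, sum_n (posf f) N <= M).
  { intro N. rewrite <- nsum_sum_n. pose proof (HM (S N)). rewrite lsum_wl in H.
    pose proof (nsum_nonneg _ (S N) Hn). lra. }
  assert (B2 : forall N, sum_n (negf f) N <= M).
  { intro N. rewrite <- nsum_sum_n. pose proof (HM (S N)). rewrite lsum_wl in H.
    pose proof (nsum_nonneg _ (S N) Hp). lra. }
  destruct (ser_bound _ _ Hp B1) as [E1 _]. destruct (ser_bound _ _ Hn B2) as [E2 _].
  split. split; assumption.
  change (Series (posf f) + Series (negf f) <= M).
  destruct E1 as [l1 H1]. destruct E2 as [l2 H2].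
  rewrite (is_series_unique _ _ H1), (is_series_unique _ _ H2).
  assert (L1 : is_lim_seq (sum_n (posf f)) l1) by exact H1.
  assert (L2 : is_lim_seq (sum_n (negf f)) l2) by exact H2.
  pose proof (is_lim_seq_plus' _ _ _ _ L1 L2) as L.
  assert (Hc : is_lim_seq (fun _ => M) M) by apply is_lim_seq_const.
  assert (HH : forall n, sum_n (posf f) n + sum_n (negf f) n <= M).
  { intro n. rewrite <- !nsum_sum_n. rewrite <- lsum_wl. auto. }
  pose proof (is_lim_seq_le _ _ _ _ HH L Hc) as H. simpl in H. exact H.
Qed.

Lemma lsum_wl_le f N : nn f -> ex_sumZ f -> lsum f (wl N) <= sumZ f.
Proof.
  intros Hf [E1 E2]. rewrite lsum_wl. unfold sumZ.
  destruct N. cbn [nsum]. pose proof (Series_nonneg (fun n => f (Z.of_nat n)) (fun n => Hf _) E1).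
  pose proof (Series_nonneg (fun n => f (- Z.of_nat (S n))%Z) (fun n => Hf _) E2). lra.
  rewrite !nsum_sum_n.
  pose proof (sum_n_le_Series (posf f) N (fun n => Hf _) E1).
  pose proof (sum_n_le_Series (negf f) N (fun n => Hf _) E2).
  unfold posf, negf in *. lra.
Qed.

Lemma lsum_le_sumZ f l : nn f -> ex_sumZ f -> NoDup l -> lsum f l <= sumZ f.
Proof.
  intros Hf He Hl.
  set (N := S (fold_right (fun x acc => max (Z.to_nat (Z.abs x)) acc) O l)).
  assert (Hinc : incl l (wl N)).
  { intros x Hx. apply in_wl. unfold N.
    assert (forall l, In x l -> (Z.to_nat (Z.abs x) <= fold_right (fun x acc => max (Z.to_nat (Z.abs x)) acc) O l)%nat).
    { clear. intro l0. induction l0 as [|y l0 IH0]; simpl. tauto. intros [->|H]. lia. specialize (IH0 H). lia. }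
    specialize (H l Hx). lia. }
  eapply Rle_trans. apply (lsum_sub f l (wl N) Hf Hl Hinc). apply lsum_wl_le; auto.
Qed.

Lemma sumZ_nonneg f : nn f -> ex_sumZ f -> 0 <= sumZ f.
Proof. intros Hf He. pose proof (lsum_wl_le f 0 Hf He). simpl in H. unfold wl in H; simpl in H. exact H. Qed.

Lemma sumZ_single f k : nn f -> ex_sumZ f -> f k <= sumZ f.
Proof.
  intros Hf He. pose proof (lsum_le_sumZ f (k :: nil) Hf He).
  simpl in H. assert (NoDup (k :: nil)) by (constructor; [simpl; tauto|constructor]). specialize (H H0). lra.
Qed.

Lemma sumZ_inj f (phi : Z -> Z) : nn f -> ex_sumZ f -> (forall x y, phi x = phi y -> x = y) ->
  ex_sumZ (fun k => f (phi k)) /\ sumZ (fun k => f (phi k)) <= sumZ f.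
Proof.
  intros Hf He Hphi. apply sumZ_bound. intro; apply Hf.
  intro N. rewrite <- lsum_map. apply lsum_le_sumZ; auto.
  apply FinFun.Injective_map_NoDup. exact Hphi. apply wl_NoDup.
Qed.

Lemma sumZ_le f g : nn f -> (forall k, f k <= g k) -> ex_sumZ g -> ex_sumZ f /\ sumZ f <= sumZ g.
Proof.
  intros Hf Hfg Hg. apply sumZ_bound; auto. intro N.
  eapply Rle_trans. apply lsum_le; eauto. apply lsum_wl_le; auto.
  intro k; specialize (Hf k); specialize (Hfg k); lra.
Qed.

Lemma sumZ_plus f g : ex_sumZ f -> ex_sumZ g ->
  ex_sumZ (fun k => f k + g k) /\ sumZ (fun k => f k + g k) = sumZ f + sumZ g.
Proof.
  intros [F1 F2] [G1 G2]. split. split.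
  apply (ex_series_plus _ _ F1 G1). apply (ex_series_plus _ _ F2 G2).
  unfold sumZ. rewrite (Series_plus _ _ F1 G1), (Series_plus _ _ F2 G2). lra.
Qed.

Lemma sumZ_scal c f : ex_sumZ f ->
  ex_sumZ (fun k => c * f k) /\ sumZ (fun k => c * f k) = c * sumZ f.
Proof.
  intros [F1 F2]. split. split.
  apply (ex_series_scal_l c _ F1). apply (ex_series_scal_l c _ F2).
  unfold sumZ. rewrite !Series_scal_l. lra.
Qed.

Lemma sumZ_ext f g : (forall k, f k = g k) -> sumZ f = sumZ g.
Proof. intro H. replace g with f. auto. apply functional_extensionality; auto. Qed.
Lemma ex_sumZ_ext f g : (forall k, f k = g k) -> ex_sumZ f -> ex_sumZ g.
Proof. intro H. replace g with f. auto. apply functional_extensionality; auto. Qed.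

Lemma sumZ_tail f eps : nn f -> ex_sumZ f -> 0 < eps -> exists N, sumZ f - eps <= lsum f (wl N).
Proof.
  intros Hf [E1 E2] He.
  destruct E1 as [l1 H1]. destruct E2 as [l2 H2].
  assert (L1 : is_lim_seq (sum_n (posf f)) l1) by exact H1.
  assert (L2 : is_lim_seq (sum_n (negf f)) l2) by exact H2.
  pose proof (is_lim_seq_plus' _ _ _ _ L1 L2) as L.
  apply is_lim_seq_spec in L. destruct (L (mkposreal eps He)) as [N HN].
  exists (S N). rewrite lsum_wl, !nsum_sum_n. unfold sumZ.
  replace (Series (fun n : nat => f (Z.of_nat n))) with l1 by (symmetry; apply is_series_unique; exact H1).
  replace (Series (fun n : nat => f (- Z.of_nat (S n))%Z)) with l2 by (symmetry; apply is_series_unique; exact H2).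
  specialize (HN N (le_n _)). simpl in HN. apply Rabs_lt_between in HN. lra.
Qed.


Lemma sumZ_zero : ex_sumZ (fun _ => 0) /\ sumZ (fun _ => 0) = 0.
Proof.
  assert (H : nn (fun _ => 0)) by (intro; lra).
  destruct (sumZ_bound (fun _ => 0) 0 H) as [E S].
  { intro N. clear. induction (wl N); simpl; lra. }
  split; auto. pose proof (sumZ_nonneg _ H E). lra.
Qed.

Lemma sumZ_lsum (F : Z -> Z -> R) (l : list Z) : (forall i, ex_sumZ (F i)) ->
  ex_sumZ (fun j => lsum (fun i => F i j) l) /\
  sumZ (fun j => lsum (fun i => F i j) l) = lsum (fun i => sumZ (F i)) l.
Proof.
  intro HF. induction l as [|i l [E S]]; simpl.
  - apply sumZ_zero.
  - destruct (sumZ_plus _ _ (HF i) E) as [E' S']. split; auto. rewrite S', S. reflexivity.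
Qed.

Lemma tonelli (F : Z -> Z -> R) : (forall j k, 0 <= F j k) -> (forall j, ex_sumZ (F j)) ->
  ex_sumZ (fun j => sumZ (F j)) ->
  (forall k, ex_sumZ (fun j => F j k)) /\ ex_sumZ (fun k => sumZ (fun j => F j k)) /\
  sumZ (fun k => sumZ (fun j => F j k)) <= sumZ (fun j => sumZ (F j)).
Proof.
  intros Hnn HF HS.
  assert (Hnn2 : forall j, nn (F j)) by (intros j k; auto).
  assert (Hk : forall k, ex_sumZ (fun j => F j k)).
  { intro k. apply (sumZ_le _ (fun j => sumZ (F j))); auto. intro; auto.
    intro j. apply sumZ_single; auto. }
  split; auto.
  apply sumZ_bound. intro k. apply sumZ_nonneg. intro; auto. auto.
  intro N. destruct (sumZ_lsum (fun i j => F j i) (wl N) Hk) as [E S].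
  rewrite <- S. apply sumZ_le; auto.
  intro j. apply lsum_nonneg. intro; auto.
  intro j. apply lsum_le_sumZ; auto. apply wl_NoDup.
Qed.

Lemma cs_aux (S A B : R) : 0 <= S -> 0 <= A -> 0 <= B ->
  (forall t, 0 < t -> S <= (t * A + B / t) / 2) -> S * S <= A * B.
Proof.
  intros HS HA HB H.
  destruct (Req_dec S 0) as [->|HS0]. nra.
  assert (HS' : 0 < S) by lra.
  destruct (Req_dec A 0) as [->|HA0].
  - exfalso. specialize (H ((B + 1) / (2 * S))).
    assert (0 < (B + 1) / (2 * S)) by (apply Rdiv_lt_0_compat; lra).
    specialize (H H0). replace (((B + 1) / (2 * S)) * 0 + B / ((B + 1) / (2 * S))) with (2 * S * B / (B + 1)) in H by (field; lra).
    assert (2 * S * B / (B + 1) / 2 < S). { apply Rmult_lt_reg_r with (2 * (B+1)). lra. field_simplify; lra. }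
    lra.
  - destruct (Req_dec B 0) as [->|HB0].
    + exfalso. specialize (H (S / A)). assert (0 < S / A) by (apply Rdiv_lt_0_compat; lra).
      specialize (H H0). replace ((S / A * A + 0 / (S / A)) / 2) with (S / 2) in H by (field; lra). lra.
    + assert (HA' : 0 < A) by lra. assert (HB' : 0 < B) by lra.
      pose proof (sqrt_lt_R0 A HA'). pose proof (sqrt_lt_R0 B HB').
      specialize (H (sqrt B / sqrt A) (Rdiv_lt_0_compat _ _ H1 H0)).
      replace ((sqrt B / sqrt A * A + B / (sqrt B / sqrt A)) / 2) with (sqrt A * sqrt B) in H.
      2:{ assert (EA : A = sqrt A * sqrt A) by (rewrite sqrt_sqrt; lra).
          assert (EB : B = sqrt B * sqrt B) by (rewrite sqrt_sqrt; lra).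
          set (a := sqrt A) in *. set (b := sqrt B) in *. clearbody a b.
          rewrite EA, EB. field. lra. }
      assert (S * S <= (sqrt A * sqrt B) * (sqrt A * sqrt B)) by nra.
      replace ((sqrt A * sqrt B) * (sqrt A * sqrt B)) with ((sqrt A * sqrt A) * (sqrt B * sqrt B)) in H2 by ring.
      rewrite !sqrt_sqrt in H2 by lra. exact H2.
Qed.

Lemma CS3 (x y w : Z -> R) : nn x -> nn y -> nn w ->
  ex_sumZ (fun k => x k ^ 2 * w k) -> ex_sumZ (fun k => y k ^ 2 * w k) ->
  ex_sumZ (fun k => x k * y k * w k) /\
  sumZ (fun k => x k * y k * w k) ^ 2 <= sumZ (fun k => x k ^ 2 * w k) * sumZ (fun k => y k ^ 2 * w k).
Proof.
  intros Hx Hy Hw Ex Ey.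
  assert (Hn : nn (fun k => x k * y k * w k)).
  { intro k. specialize (Hx k); specialize (Hy k); specialize (Hw k). apply Rmult_le_pos; auto. apply Rmult_le_pos; auto. }
  assert (Ht : forall t, 0 < t -> ex_sumZ (fun k => x k * y k * w k) /\
     sumZ (fun k => x k * y k * w k) <= (t * sumZ (fun k => x k ^ 2 * w k) + sumZ (fun k => y k ^ 2 * w k) / t) / 2).
  { intros t Ht.
    destruct (sumZ_scal (t/2) _ Ex) as [E1 S1].
    destruct (sumZ_scal (/t/2) _ Ey) as [E2 S2].
    destruct (sumZ_plus _ _ E1 E2) as [E3 S3].
    assert (Hpt : forall k, x k * y k * w k <= t / 2 * (x k ^ 2 * w k) + / t / 2 * (y k ^ 2 * w k)).
    { intro k. specialize (Hx k); specialize (Hy k); specialize (Hw k).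
      assert (0 <= (t * x k - y k) ^ 2 * w k) by (apply Rmult_le_pos; [apply pow2_ge_0| exact Hw]).
      apply Rmult_le_reg_l with (2 * t). lra.
      replace (2 * t * (t / 2 * (x k ^ 2 * w k) + / t / 2 * (y k ^ 2 * w k))) with (t*t* x k ^ 2 * w k + y k ^ 2 * w k) by (field; lra).
      nra. }
    destruct (sumZ_le _ _ Hn Hpt E3) as [E4 S4].
    split; auto. rewrite S3, S1, S2 in S4.
    replace ((t * sumZ (fun k : Z => x k ^ 2 * w k) + sumZ (fun k : Z => y k ^ 2 * w k) / t) / 2) with (t / 2 * sumZ (fun k : Z => x k ^ 2 * w k) + / t / 2 * sumZ (fun k : Z => y k ^ 2 * w k)) by (field; lra). exact S4. }
  destruct (Ht 1 Rlt_0_1) as [E _]. split; auto.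
  assert (HA := sumZ_nonneg _ (fun k => Rmult_le_pos _ _ (pow2_ge_0 (x k)) (Hw k)) Ex).
  assert (HB := sumZ_nonneg _ (fun k => Rmult_le_pos _ _ (pow2_ge_0 (y k)) (Hw k)) Ey).
  pose proof (cs_aux _ _ _ (sumZ_nonneg _ Hn E) HA HB (fun t Ht0 => proj2 (Ht t Ht0))).
  replace (sumZ (fun k => x k * y k * w k) ^ 2) with (sumZ (fun k => x k * y k * w k) * sumZ (fun k => x k * y k * w k)) by ring. exact H.
Qed.


Lemma sumZ_abs g : ex_sumZ (fun k => Rabs (g k)) -> ex_sumZ g /\ Rabs (sumZ g) <= sumZ (fun k => Rabs (g k)).
Proof.
  intros [E1 E2].
  pose proof (ex_series_Rabs _ E1). pose proof (ex_series_Rabs _ E2).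
  split. split; auto.
  unfold sumZ. pose proof (Series_Rabs _ E1). pose proof (Series_Rabs _ E2).
  eapply Rle_trans. apply Rabs_triang. lra.
Qed.

Lemma Cmod_le_ReIm (c : C) : Cmod c <= Rabs (Re c) + Rabs (Im c).
Proof.
  unfold Cmod, Re, Im. destruct c as [x y]; simpl.
  rewrite <- (sqrt_pow2 (Rabs x + Rabs y)) by (pose proof (Rabs_pos x); pose proof (Rabs_pos y); lra).
  apply sqrt_le_1_alt.
  pose proof (Rabs_pos x); pose proof (Rabs_pos y).
  pose proof (pow2_abs x). pose proof (pow2_abs y). simpl in *. nra.
Qed.

Lemma im_le_Cmod (c : C) : Rabs (Im c) <= Cmod c.
Proof. eapply Rle_trans; [|apply Rmax_Cmod]. apply Rmax_r. Qed.

Definition exC (F : Z -> C) := ex_sumZ (fun k => Cmod (F k)).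

Lemma exC_Re F : exC F -> ex_sumZ (fun k => Rabs (Re (F k))).
Proof. intro H. apply (sumZ_le _ _ (fun k => Rabs_pos _) (fun k => re_le_Cmod (F k)) H). Qed.
Lemma exC_Im F : exC F -> ex_sumZ (fun k => Rabs (Im (F k))).
Proof. intro H. apply (sumZ_le _ _ (fun k => Rabs_pos _) (fun k => im_le_Cmod (F k)) H). Qed.

Lemma sumZC_bound F : exC F -> Cmod (sumZC F) <= 2 * sumZ (fun k => Cmod (F k)).
Proof.
  intro H. eapply Rle_trans. apply Cmod_le_ReIm. unfold sumZC, Re, Im; simpl.
  destruct (sumZ_abs _ (exC_Re F H)) as [_ H1].
  destruct (sumZ_abs _ (exC_Im F H)) as [_ H2].
  pose proof (proj2 (sumZ_le _ _ (fun k => Rabs_pos _) (fun k => re_le_Cmod (F k)) H)).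
  pose proof (proj2 (sumZ_le _ _ (fun k => Rabs_pos _) (fun k => im_le_Cmod (F k)) H)).
  unfold Re, Im in *. lra.
Qed.

Lemma sumZC_plus F G : exC F -> exC G -> sumZC (fun k => Cplus (F k) (G k)) = Cplus (sumZC F) (sumZC G).
Proof.
  intros HF HG. unfold sumZC, Cplus; simpl.
  destruct (sumZ_abs _ (exC_Re F HF)) as [E1 _].
  destruct (sumZ_abs _ (exC_Im F HF)) as [E2 _].
  destruct (sumZ_abs _ (exC_Re G HG)) as [E3 _].
  destruct (sumZ_abs _ (exC_Im G HG)) as [E4 _].
  f_equal.
  - rewrite <- (proj2 (sumZ_plus _ _ E1 E3)). apply sumZ_ext. intro; reflexivity.
  - rewrite <- (proj2 (sumZ_plus _ _ E2 E4)). apply sumZ_ext. intro; reflexivity.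
Qed.

Lemma sumZ_opp f : sumZ (fun k => - f k) = - sumZ f.
Proof. unfold sumZ. rewrite !Series_opp. lra. Qed.

Lemma sumZC_opp F : sumZC (fun k => Copp (F k)) = Copp (sumZC F).
Proof. unfold sumZC, Copp; simpl. f_equal; apply sumZ_opp. Qed.

Lemma exC_le F g : nn g -> (forall k, Cmod (F k) <= g k) -> ex_sumZ g -> exC F.
Proof. intros Hg H E. apply (sumZ_le _ _ (fun k => Cmod_ge_0 _) H E). Qed.


Lemma CS2 (x y : Z -> R) : nn x -> nn y -> ex_sumZ (fun k => x k ^ 2) -> ex_sumZ (fun k => y k ^ 2) ->
  ex_sumZ (fun k => x k * y k) /\
  sumZ (fun k => x k * y k) ^ 2 <= sumZ (fun k => x k ^ 2) * sumZ (fun k => y k ^ 2).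
Proof.
  intros Hx Hy Ex Ey.
  assert (H1 : nn (fun _ => 1)) by (intro; lra).
  assert (Ex' : ex_sumZ (fun k => x k ^ 2 * 1)) by (apply (ex_sumZ_ext (fun k => x k ^ 2)); [intro; ring|auto]).
  assert (Ey' : ex_sumZ (fun k => y k ^ 2 * 1)) by (apply (ex_sumZ_ext (fun k => y k ^ 2)); [intro; ring|auto]).
  destruct (CS3 x y _ Hx Hy H1 Ex' Ey') as [E S].
  rewrite (sumZ_ext (fun k => x k * y k * 1) (fun k => x k * y k)) in S by (intro; ring).
  rewrite (sumZ_ext (fun k => x k ^ 2 * 1) (fun k => x k ^ 2)) in S by (intro; ring).
  rewrite (sumZ_ext (fun k => y k ^ 2 * 1) (fun k => y k ^ 2)) in S by (intro; ring).
  split; auto. apply (ex_sumZ_ext (fun k => x k * y k * 1)); [intro; ring|auto].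
Qed.

Lemma CSw (x w : Z -> R) : nn x -> nn w -> ex_sumZ (fun k => x k ^ 2 * w k) -> ex_sumZ w ->
  ex_sumZ (fun k => x k * w k) /\
  sumZ (fun k => x k * w k) ^ 2 <= sumZ (fun k => x k ^ 2 * w k) * sumZ w.
Proof.
  intros Hx Hw Ex Ew.
  assert (H1 : nn (fun _ => 1)) by (intro; lra).
  assert (Ew' : ex_sumZ (fun k => 1 ^ 2 * w k)) by (apply (ex_sumZ_ext w); [intro; ring|auto]).
  destruct (CS3 x _ w Hx H1 Hw Ex Ew') as [E S].
  rewrite (sumZ_ext (fun k => x k * 1 * w k) (fun k => x k * w k)) in S by (intro; ring).
  rewrite (sumZ_ext (fun k => 1 ^ 2 * w k) w) in S by (intro; ring).
  split; auto. apply (ex_sumZ_ext (fun k => x k * 1 * w k)); [intro; ring|auto].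
Qed.

Lemma shift_inj (k : Z) : forall x y : Z, (k - x)%Z = (k - y)%Z -> x = y.
Proof. intros; lia. Qed.
Lemma shift_inj2 (j : Z) : forall x y : Z, (x - j)%Z = (y - j)%Z -> x = y.
Proof. intros; lia. Qed.

Lemma pow_split (x y c : R) (m : nat) : 0 <= x -> 0 <= y -> 0 <= c ->
  (c * (x + y)) ^ m <= c ^ m * 2 ^ m * (x ^ m + y ^ m).
Proof.
  intros Hx Hy Hc.
  assert (0 <= x ^ m) by (apply pow_le; auto). assert (0 <= y ^ m) by (apply pow_le; auto).
  assert (0 <= c ^ m) by (apply pow_le; auto). assert (0 <= 2 ^ m) by (apply pow_le; lra).
  destruct (Rle_dec x y).
  - assert ((c * (x + y)) ^ m <= (c * 2 * y) ^ m) by (apply pow_incr; split; nra).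
    eapply Rle_trans; [exact H3|]. rewrite !Rpow_mult_distr.
    assert (0 <= c^m*2^m*x^m) by (repeat apply Rmult_le_pos; auto).
    assert (0 <= c^m*2^m*y^m) by (repeat apply Rmult_le_pos; auto). nra.
  - assert ((c * (x + y)) ^ m <= (c * 2 * x) ^ m) by (apply pow_incr; split; nra).
    eapply Rle_trans; [exact H3|]. rewrite !Rpow_mult_distr.
    assert (0 <= c^m*2^m*x^m) by (repeat apply Rmult_le_pos; auto).
    assert (0 <= c^m*2^m*y^m) by (repeat apply Rmult_le_pos; auto). nra.
Qed.

Section Core.
Variables (Lm Lpm : Z -> R) (c : R).
Hypotheses (Hc : 0 < c) (HLm : forall k, 1 <= Lm k) (HLpm : forall j, 1 <= Lpm j)
  (Htri : forall j k, Lpm j <= c * (Lm k + Lm (k - j)))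
  (HZ : ex_sumZ (fun k => / Lm k ^ 2)).

Lemma conv_core (p q : Z -> R) : nn p -> nn q ->
  ex_sumZ (fun j => (p j / Lpm j) ^ 2) -> ex_sumZ (fun i => (Lm i * q i) ^ 2) ->
  (forall k, ex_sumZ (fun j => p j * q (k - j)%Z)) /\
  ex_sumZ (fun k => (sumZ (fun j => p j * q (k - j)%Z) / Lm k) ^ 2) /\
  sumZ (fun k => (sumZ (fun j => p j * q (k - j)%Z) / Lm k) ^ 2) <=
   4 * c ^ 2 * sumZ (fun k => / Lm k ^ 2) * sumZ (fun j => (p j / Lpm j) ^ 2) * sumZ (fun i => (Lm i * q i) ^ 2).
Proof.
  intros Hp Hq EA EB.
  set (A := sumZ (fun j => (p j / Lpm j) ^ 2)).
  set (B := sumZ (fun i => (Lm i * q i) ^ 2)).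
  set (Zb := sumZ (fun k => / Lm k ^ 2)).
  set (a := fun j => p j / Lpm j).
  set (bb := fun i => Lm i * q i).
  assert (Lpos : forall k, 0 < Lm k) by (intro k; specialize (HLm k); lra).
  assert (Lppos : forall k, 0 < Lpm k) by (intro k; specialize (HLpm k); lra).
  assert (Ha : nn a) by (intro j; unfold a; apply Rdiv_le_0_compat; auto).
  assert (Hbb : nn bb) by (intro j; unfold bb; apply Rmult_le_pos; [specialize (Lpos j); lra|auto]).
  assert (Hinv : nn (fun k => / Lm k)) by (intro k; left; apply Rinv_0_lt_compat; auto).
  assert (Hinv2 : nn (fun k => / Lm k ^ 2)) by (intro k; left; apply Rinv_0_lt_compat; apply pow_lt; auto).
  assert (HA0 : 0 <= A) by (apply sumZ_nonneg; auto; intro; apply pow2_ge_0).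
  assert (HB0 : 0 <= B) by (apply sumZ_nonneg; auto; intro; apply pow2_ge_0).
  assert (HZ0 : 0 <= Zb) by (apply sumZ_nonneg; auto).
  assert (EA' : ex_sumZ (fun j => a j ^ 2)) by exact EA.
  assert (EB' : ex_sumZ (fun j => bb j ^ 2)) by exact EB.
  assert (EZ' : ex_sumZ (fun k => (/ Lm k) ^ 2)).
  { apply (ex_sumZ_ext (fun k => / Lm k ^ 2)); auto. intro k. rewrite pow_inv. reflexivity. }
  destruct (CS2 bb (fun k => / Lm k) Hbb Hinv EB' EZ') as [Eq1 Sq1].
  assert (Eqq : forall k, bb k * / Lm k = q k) by (intro k; unfold bb; field; specialize (Lpos k); lra).
  rewrite (sumZ_ext _ _ Eqq) in Sq1.
  assert (Eq : ex_sumZ q) by (apply (ex_sumZ_ext _ _ Eqq); auto).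
  rewrite (sumZ_ext (fun k => (/ Lm k) ^ 2) (fun k => / Lm k ^ 2)) in Sq1 by (intro k; rewrite pow_inv; reflexivity).
  set (L1 := sumZ q) in *.
  assert (HL10 : 0 <= L1) by (apply sumZ_nonneg; auto).
  fold B Zb in Sq1.
  assert (Eshb : forall k, ex_sumZ (fun j => bb (k - j)%Z ^ 2) /\ sumZ (fun j => bb (k - j)%Z ^ 2) <= B).
  { intro k. apply (sumZ_inj (fun i => bb i ^ 2)); auto. intro; apply pow2_ge_0. apply shift_inj. }
  assert (Eshq : forall k, ex_sumZ (fun j => q (k - j)%Z) /\ sumZ (fun j => q (k - j)%Z) <= L1).
  { intro k. apply (sumZ_inj q); auto. apply shift_inj. }
  assert (HQ : forall k, ex_sumZ (fun j => a j * bb (k - j)%Z) /\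
     sumZ (fun j => a j * bb (k - j)%Z) ^ 2 <= A * B).
  { intro k. destruct (Eshb k) as [E1 S1].
    destruct (CS2 a (fun j => bb (k - j)%Z) Ha (fun j => Hbb _) EA' E1) as [E2 S2].
    split; auto. eapply Rle_trans; [exact S2|]. apply Rmult_le_compat_l; auto. }
  assert (EG : forall k, ex_sumZ (fun j => a j ^ 2 * q (k - j)%Z)).
  { intro k. destruct (sumZ_scal L1 _ EA') as [E1 _].
    apply (sumZ_le _ (fun j => L1 * a j ^ 2)); auto.
    intro j. apply Rmult_le_pos; [apply pow2_ge_0|auto].
    intro j. rewrite Rmult_comm. apply Rmult_le_compat_r. apply pow2_ge_0.
    eapply Rle_trans. apply (sumZ_single (fun j => q (k - j)%Z) j); auto. intro; auto.
    apply Eshq. apply Eshq. }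
  assert (HP : forall k, ex_sumZ (fun j => a j * q (k - j)%Z) /\
     sumZ (fun j => a j * q (k - j)%Z) ^ 2 <= sumZ (fun j => a j ^ 2 * q (k - j)%Z) * L1).
  { intro k. destruct (Eshq k) as [E1 S1].
    destruct (CSw a (fun j => q (k - j)%Z) Ha (fun j => Hq _) (EG k) E1) as [E2 S2].
    split; auto. eapply Rle_trans; [exact S2|]. apply Rmult_le_compat_l; auto.
    apply sumZ_nonneg; auto. intro j. apply Rmult_le_pos; [apply pow2_ge_0|auto]. }
  assert (Hpt : forall k j, p j * q (k - j)%Z <= c * (Lm k * (a j * q (k - j)%Z) + a j * bb (k - j)%Z)).
  { intros k j. unfold a, bb.
    specialize (Htri j k). specialize (Lppos j). specialize (Hp j). specialize (Hq (k - j)%Z).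
    assert (E : p j * q (k - j)%Z = (p j / Lpm j) * Lpm j * q (k - j)%Z) by (field; lra).
    rewrite E. assert (0 <= p j / Lpm j) by (apply Rdiv_le_0_compat; lra).
    assert (0 <= p j / Lpm j * q (k - j)%Z) by (apply Rmult_le_pos; lra). nra. }
  assert (HS : forall k, ex_sumZ (fun j => p j * q (k - j)%Z) /\
     sumZ (fun j => p j * q (k - j)%Z) <= c * (Lm k * sumZ (fun j => a j * q (k - j)%Z) + sumZ (fun j => a j * bb (k - j)%Z))).
  { intro k. destruct (HP k) as [E1 _]. destruct (HQ k) as [E2 _].
    destruct (sumZ_scal (Lm k) _ E1) as [E3 S3].
    destruct (sumZ_plus _ _ E3 E2) as [E4 S4].
    destruct (sumZ_scal c _ E4) as [E5 S5].
    destruct (sumZ_le (fun j => p j * q (k - j)%Z) _ (fun j => Rmult_le_pos _ _ (Hp j) (Hq _)) (Hpt k) E5) as [E6 S6].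
    split; auto. rewrite S5, S4, S3 in S6. exact S6. }
  set (F := fun j k => a j ^ 2 * q (k - j)%Z).
  assert (HFnn : forall j k, 0 <= F j k) by (intros; unfold F; apply Rmult_le_pos; [apply pow2_ge_0|auto]).
  assert (HFj : forall j, ex_sumZ (F j) /\ sumZ (F j) <= L1 * a j ^ 2).
  { intro j. destruct (sumZ_inj q (fun k => (k - j)%Z) Hq Eq (shift_inj2 j)) as [E1 S1].
    destruct (sumZ_scal (a j ^ 2) _ E1) as [E2 S2].
    split. exact E2. unfold F. rewrite S2. rewrite Rmult_comm. apply Rmult_le_compat_r; auto. apply pow2_ge_0. }
  destruct (sumZ_scal L1 _ EA') as [EL1 SL1].
  destruct (sumZ_le (fun j => sumZ (F j)) (fun j => L1 * a j ^ 2)) as [EF SF].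
  { intro j. apply sumZ_nonneg. intro; auto. apply HFj. }
  { intro j. apply HFj. }
  { exact EL1. }
  destruct (tonelli F HFnn (fun j => proj1 (HFj j)) EF) as [_ [EGs SGs]].
  rewrite SL1 in SF. fold A in SF.
  unfold F in EGs, SGs.
  set (G := fun k => sumZ (fun j => a j ^ 2 * q (k - j)%Z)) in *.
  assert (HG0 : forall k, 0 <= G k).
  { intro k. apply sumZ_nonneg; auto. intro j. apply Rmult_le_pos; [apply pow2_ge_0|auto]. }
  destruct (sumZ_scal (2 * c ^ 2 * L1) _ EGs) as [Eh1 Sh1].
  destruct (sumZ_scal (2 * c ^ 2 * A * B) _ HZ) as [Eh2 Sh2].
  destruct (sumZ_plus _ _ Eh1 Eh2) as [Eh Sh].
  assert (HT : forall k, (sumZ (fun j => p j * q (k - j)%Z) / Lm k) ^ 2 <=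
      2 * c ^ 2 * L1 * G k + 2 * c ^ 2 * A * B * / Lm k ^ 2).
  { intro k. destruct (HS k) as [E1 S1]. destruct (HP k) as [_ S2]. destruct (HQ k) as [_ S3].
    fold (G k) in S2.
    set (S := sumZ (fun j => p j * q (k - j)%Z)) in *.
    set (P := sumZ (fun j => a j * q (k - j)%Z)) in *.
    set (Q := sumZ (fun j => a j * bb (k - j)%Z)) in *.
    assert (HS0 : 0 <= S) by (apply sumZ_nonneg; [intro j; apply Rmult_le_pos; auto|exact E1]).
    assert (HP0 : 0 <= P) by (apply sumZ_nonneg; [intro j; apply Rmult_le_pos; auto|exact (proj1 (HP k))]).
    assert (HQ0 : 0 <= Q) by (apply sumZ_nonneg; [intro j; apply Rmult_le_pos; auto|exact (proj1 (HQ k))]).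
    specialize (Lpos k). set (L := Lm k) in *.
    assert (E1' : S / L <= c * (P + Q / L)).
    { apply Rmult_le_reg_r with L; auto. replace (S / L * L) with S by (field; lra).
      replace (c * (P + Q / L) * L) with (c * (L * P + Q)) by (field; lra). exact S1. }
    assert (0 <= S / L) by (apply Rdiv_le_0_compat; lra).
    assert (0 <= Q / L) by (apply Rdiv_le_0_compat; lra).
    assert ((S / L) ^ 2 <= (c * (P + Q / L)) ^ 2) by (apply pow_incr; lra).
    assert ((c * (P + Q / L)) ^ 2 <= 2 * c ^ 2 * (P ^ 2 + (Q / L) ^ 2)).
    { assert (0 <= (P - Q / L) ^ 2) by apply pow2_ge_0. nra. }
    assert ((Q / L) ^ 2 <= A * B * / L ^ 2).
    { replace ((Q / L) ^ 2) with (Q ^ 2 * / L ^ 2) by (field; lra).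
      apply Rmult_le_compat_r; auto. left; apply Rinv_0_lt_compat; apply pow_lt; lra. }
    assert (0 <= c ^ 2) by apply pow2_ge_0.
    assert (2*c^2*(P^2+(Q/L)^2) <= 2*c^2*(G k*L1 + A*B*/L^2)) by (apply Rmult_le_compat_l; lra).
    replace (2 * c ^ 2 * L1 * G k + 2 * c ^ 2 * A * B * / L ^ 2) with (2*c^2*(G k*L1 + A*B*/L^2)) by ring.
    lra. }
  destruct (sumZ_le _ _ (fun k => pow2_ge_0 _) HT Eh) as [ET ST].
  split. intro k; apply HS. split. exact ET.
  eapply Rle_trans; [exact ST|]. rewrite Sh, Sh1, Sh2. fold Zb.
  assert (L1 * L1 <= B * Zb) by (replace (L1*L1) with (L1^2) by ring; exact Sq1).
  assert (0 <= c ^ 2) by apply pow2_ge_0.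
  assert (sumZ G <= L1 * A) by (eapply Rle_trans; [exact SGs|exact SF]).
  assert (2 * c ^ 2 * L1 * sumZ G <= 2 * c ^ 2 * L1 * (L1 * A)).
  { apply Rmult_le_compat_l; auto. nra. }
  assert (2 * c ^ 2 * L1 * (L1 * A) <= 2 * c ^ 2 * (B * Zb) * A).
  { replace (2 * c ^ 2 * L1 * (L1 * A)) with (2 * c ^ 2 * A * (L1 * L1)) by ring.
    replace (2 * c ^ 2 * (B * Zb) * A) with (2 * c ^ 2 * A * (B * Zb)) by ring.
    apply Rmult_le_compat_l; auto. nra. }
  nra.
Qed.
End Core.


Definition ell (b : bool) (k : Z) : R := jbr (freq b k).
Definition Lm (b : bool) (m : nat) (k : Z) : R := ell b k ^ m.

Lemma ell_ge1 b k : 1 <= ell b k.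
Proof. unfold ell, jbr. pose proof (Rabs_pos (freq b k)). lra. Qed.

Lemma Lm_ge1 b m k : 1 <= Lm b m k.
Proof. apply pow_R1_Rle, ell_ge1. Qed.

Lemma Lm_pos b m k : 0 < Lm b m k.
Proof. pose proof (Lm_ge1 b m k); lra. Qed.

Lemma freq_split b j k : freq true j = freq b k - freq b (k - j).
Proof. destruct b; unfold freq; rewrite <- minus_IZR; f_equal; lia. Qed.

Lemma ell_tri b j k : ell true j <= ell b k + ell b (k - j).
Proof.
  unfold ell, jbr. rewrite (freq_split b j k).
  pose proof (Rabs_triang (freq b k) (- freq b (k - j))). rewrite Rabs_Ropp in H.
  unfold Rminus. lra.
Qed.

Lemma Lm_tri b m j k : Lm true m j <= 2 ^ m * (Lm b m k + Lm b m (k - j)).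
Proof.
  unfold Lm. pose proof (pow_split (ell b k) (ell b (k - j)) 1 m).
  pose proof (ell_ge1 b k); pose proof (ell_ge1 b (k - j)); pose proof (ell_ge1 true j).
  eapply Rle_trans. apply pow_incr. split. lra. apply ell_tri.
  replace (ell b k + ell b (k - j)) with (1 * (ell b k + ell b (k - j))) by ring.
  eapply Rle_trans. apply H; lra. rewrite pow1. lra.
Qed.

Lemma ell_lower b k : 1 + Rabs (IZR k) <= ell b k.
Proof.
  unfold ell, jbr. apply Rplus_le_compat_l. rewrite !Rabs_Zabs.
  destruct b; unfold freq; rewrite Rabs_Zabs; apply IZR_le; lia.
Qed.

Lemma nsum_inv2 N : nsum (fun n => / (1 + INR n) ^ 2) N + 2 / (INR N + 1) <= 2.
Proof.
  induction N. simpl. lra.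
  cbn [nsum]. rewrite S_INR.
  pose proof (pos_INR N).
  assert (H1 : 0 <= 2 / (INR N + 1) - (/ (1 + INR N) ^ 2 + 2 / (INR N + 1 + 1))).
  { replace (2 / (INR N + 1) - (/ (1 + INR N) ^ 2 + 2 / (INR N + 1 + 1)))
       with (INR N / ((INR N + 1) ^ 2 * (INR N + 2))) by (field; lra).
    apply Rdiv_le_0_compat. lra. apply Rmult_lt_0_compat. apply pow_lt; lra. lra. }
  lra.
Qed.

Lemma nsum_le a c N : (forall n, a n <= c n) -> nsum a N <= nsum c N.
Proof. intro H; induction N; simpl. lra. specialize (H N); lra. Qed.

Definition zw (k : Z) : R := / (1 + Rabs (IZR k)) ^ 2.

Lemma zw_nn : nn zw.
Proof. intro k. unfold zw. left. apply Rinv_0_lt_compat. apply pow_lt. pose proof (Rabs_pos (IZR k)); lra. Qed.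

Lemma zw_win : forall N, lsum zw (wl N) <= 4.
Proof.
  intro N. rewrite lsum_wl.
  assert (H : forall n, posf zw n <= / (1 + INR n) ^ 2 /\ negf zw n <= / (1 + INR n) ^ 2).
  { intro n. unfold posf, negf, zw. rewrite INR_IZR_INZ. split.
    - rewrite Rabs_pos_eq. lra. apply IZR_le; lia.
    - apply Rinv_le_contravar. apply pow_lt. pose proof (pos_INR n). rewrite INR_IZR_INZ in H. lra.
      apply pow_incr. split. pose proof (pos_INR n). rewrite INR_IZR_INZ in H. lra.
      rewrite Rabs_Zabs. apply Rplus_le_compat_l. apply IZR_le. lia. }
  pose proof (nsum_le _ _ N (fun n => proj1 (H n))).
  pose proof (nsum_le _ _ N (fun n => proj2 (H n))).
  pose proof (nsum_inv2 N). pose proof (pos_INR N).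
  assert (0 <= 2 / (INR N + 1)) by (apply Rdiv_le_0_compat; lra). lra.
Qed.
Lemma zw_ex : ex_sumZ zw.
Proof. exact (proj1 (sumZ_bound zw 4 zw_nn zw_win)). Qed.
Lemma zw_sum : sumZ zw <= 4.
Proof. exact (proj2 (sumZ_bound zw 4 zw_nn zw_win)). Qed.

Lemma Lm_inv2_le b m k : (1 <= m)%nat -> / Lm b m k ^ 2 <= zw k.
Proof.
  intro hm. unfold zw. apply Rinv_le_contravar. apply pow_lt. pose proof (Rabs_pos (IZR k)); lra.
  apply pow_incr. split. pose proof (Rabs_pos (IZR k)); lra.
  eapply Rle_trans. apply (ell_lower b). unfold Lm.
  replace m with (S (m - 1)) by lia. simpl.
  pose proof (ell_ge1 b k). pose proof (pow_R1_Rle (ell b k) (m - 1) H). nra.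
Qed.

Lemma Lm_inv2_ex b m : (1 <= m)%nat -> ex_sumZ (fun k => / Lm b m k ^ 2).
Proof.
  intro hm. apply (proj1 (sumZ_le _ zw (fun k => ltac:(left; apply Rinv_0_lt_compat; apply pow_lt; apply Lm_pos)) (fun k => Lm_inv2_le b m k hm) zw_ex)).
Qed.

Definition Zb (b : bool) (m : nat) : R := sumZ (fun k => / Lm b m k ^ 2).
Definition Kc (b : bool) (m : nat) : R := 16 * (2 ^ m) ^ 2 * Zb b m.

Lemma Kc_nn b m : (1 <= m)%nat -> 0 <= Kc b m.
Proof.
  intro hm. unfold Kc. apply Rmult_le_pos. apply Rmult_le_pos. lra. apply pow2_ge_0.
  apply sumZ_nonneg. intro k. left; apply Rinv_0_lt_compat; apply pow_lt; apply Lm_pos.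
  apply Lm_inv2_ex; auto.
Qed.

Definition EP b m (u : Z -> C) := ex_sumZ (fun k => (Lm b m k * Cmod (u k)) ^ 2).
Definition NP b m (u : Z -> C) := sumZ (fun k => (Lm b m k * Cmod (u k)) ^ 2).
Definition EN b m (u : Z -> C) := ex_sumZ (fun k => (Cmod (u k) / Lm b m k) ^ 2).
Definition NN b m (u : Z -> C) := sumZ (fun k => (Cmod (u k) / Lm b m k) ^ 2).

Lemma conv_est b m (hm : (1 <= m)%nat) (W z : Z -> C) : EN true m W -> EP b m z ->
  (forall k, exC (fun j => Cmult (W j) (z (k - j)%Z))) /\
  EN b m (conv W z) /\ NN b m (conv W z) <= Kc b m * NN true m W * NP b m z.
Proof.
  intros HW Hz.
  assert (Hc : 0 < 2 ^ m) by (apply pow_lt; lra).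
  destruct (conv_core (Lm b m) (Lm true m) (2 ^ m) (Lm_ge1 b m) (Lm_ge1 true m) (Lm_tri b m)
     (Lm_inv2_ex b m hm) (fun j => Cmod (W j)) (fun i => Cmod (z i)) (fun _ => Cmod_ge_0 _) (fun _ => Cmod_ge_0 _) HW Hz)
    as [E1 [E2 S2]].
  assert (Hex : forall k, exC (fun j => Cmult (W j) (z (k - j)%Z))).
  { intro k. apply (exC_le _ (fun j => Cmod (W j) * Cmod (z (k - j)%Z)) (fun j => Rmult_le_pos _ _ (Cmod_ge_0 _) (Cmod_ge_0 _))).
    intro j. rewrite Cmod_mult. lra. apply E1. }
  assert (Hpt : forall k, (Cmod (conv W z k) / Lm b m k) ^ 2 <=
      4 * (sumZ (fun j => Cmod (W j) * Cmod (z (k - j)%Z)) / Lm b m k) ^ 2).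
  { intro k. unfold conv. pose proof (sumZC_bound _ (Hex k)). cbv beta in H.
    rewrite (sumZ_ext (fun j => Cmod (Cmult (W j) (z (k - j)%Z))) (fun j => Cmod (W j) * Cmod (z (k - j)%Z))) in H
      by (intro; apply Cmod_mult).
    pose proof (Lm_pos b m k). pose proof (Cmod_ge_0 (sumZC (fun j => Cmult (W j) (z (k - j)%Z)))).
    assert (0 <= Cmod (sumZC (fun j => Cmult (W j) (z (k - j)%Z))) / Lm b m k) by (apply Rdiv_le_0_compat; lra).
    assert (Cmod (sumZC (fun j => Cmult (W j) (z (k - j)%Z))) / Lm b m k <= 2 * (sumZ (fun j => Cmod (W j) * Cmod (z (k - j)%Z)) / Lm b m k)).
    { unfold Rdiv. rewrite <- Rmult_assoc. apply Rmult_le_compat_r. left; apply Rinv_0_lt_compat; auto. exact H. }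
    replace (4 * (sumZ (fun j => Cmod (W j) * Cmod (z (k - j)%Z)) / Lm b m k) ^ 2) with
      ((2 * (sumZ (fun j => Cmod (W j) * Cmod (z (k - j)%Z)) / Lm b m k)) ^ 2) by ring.
    apply pow_incr. lra. }
  destruct (sumZ_scal 4 _ E2) as [E3 S3].
  destruct (sumZ_le _ _ (fun k => pow2_ge_0 _) Hpt E3) as [E4 S4].
  split; auto. split; auto. unfold NN. eapply Rle_trans. exact S4. rewrite S3.
  unfold Kc, Zb, NN, NP. lra.
Qed.


Definition Ew (w : Z -> R) (x : Z -> C) := ex_sumZ (fun k => (w k * Cmod (x k)) ^ 2).
Definition Nw (w : Z -> R) (x : Z -> C) := sumZ (fun k => (w k * Cmod (x k)) ^ 2).

Lemma Nw_nonneg w x : Ew w x -> 0 <= Nw w x.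
Proof. intro H. apply sumZ_nonneg; auto. intro; apply pow2_ge_0. Qed.

Lemma Ew_single w x k : Ew w x -> (w k * Cmod (x k)) ^ 2 <= Nw w x.
Proof. intro H. apply (sumZ_single (fun k => (w k * Cmod (x k)) ^ 2)); auto. intro; apply pow2_ge_0. Qed.

Lemma Ew_le w w' x y c : 0 <= c -> Ew w' y ->
  (forall k, (w k * Cmod (x k)) ^ 2 <= c * (w' k * Cmod (y k)) ^ 2) -> Ew w x /\ Nw w x <= c * Nw w' y.
Proof.
  intros Hc Hy H. destruct (sumZ_scal c _ Hy) as [E S].
  destruct (sumZ_le _ _ (fun k => pow2_ge_0 _) H E) as [E' S'].
  split; auto. unfold Nw. rewrite <- S. exact S'.
Qed.

Lemma sq_tri (a b c : R) : 0 <= a -> 0 <= b -> 0 <= c -> a <= b + c -> a ^ 2 <= 2 * b ^ 2 + 2 * c ^ 2.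
Proof. intros. assert (a ^ 2 <= (b + c) ^ 2) by (apply pow_incr; lra).
  assert (0 <= (b - c) ^ 2) by apply pow2_ge_0. simpl in *. nra. Qed.

Lemma Ew_comb w x y z : (forall k, 0 <= w k) -> Ew w x -> Ew w y ->
  (forall k, Cmod (z k) <= Cmod (x k) + Cmod (y k)) -> Ew w z /\ Nw w z <= 2 * Nw w x + 2 * Nw w y.
Proof.
  intros Hw Hx Hy H.
  destruct (sumZ_scal 2 _ Hx) as [E1 S1]. destruct (sumZ_scal 2 _ Hy) as [E2 S2].
  destruct (sumZ_plus _ _ E1 E2) as [E3 S3].
  assert (Hpt : forall k, (w k * Cmod (z k)) ^ 2 <= 2 * (w k * Cmod (x k)) ^ 2 + 2 * (w k * Cmod (y k)) ^ 2).
  { intro k. apply sq_tri. apply Rmult_le_pos; auto; apply Cmod_ge_0.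
    apply Rmult_le_pos; auto; apply Cmod_ge_0. apply Rmult_le_pos; auto; apply Cmod_ge_0.
    specialize (Hw k); specialize (H k). nra. }
  destruct (sumZ_le (fun k => (w k * Cmod (z k)) ^ 2) _ (fun k => pow2_ge_0 _) Hpt E3) as [E S].
  split; auto. unfold Nw. rewrite S3, S1, S2 in S. exact S.
Qed.

Lemma Cmod_sub_le (a b : C) : Cmod (Cminus a b) <= Cmod a + Cmod b.
Proof. unfold Cminus. eapply Rle_trans. apply Cmod_triangle. rewrite Cmod_opp. lra. Qed.
Lemma Cmod_add_le (a b : C) : Cmod (Cplus a b) <= Cmod a + Cmod b.
Proof. apply Cmod_triangle. Qed.

Lemma Ew_sub w x y : (forall k, 0 <= w k) -> Ew w x -> Ew w y ->
  Ew w (fun k => Cminus (x k) (y k)) /\ Nw w (fun k => Cminus (x k) (y k)) <= 2 * Nw w x + 2 * Nw w y.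
Proof. intros. apply Ew_comb; auto. intro; apply Cmod_sub_le. Qed.

Lemma Ew_add w x y : (forall k, 0 <= w k) -> Ew w x -> Ew w y ->
  Ew w (fun k => Cplus (x k) (y k)) /\ Nw w (fun k => Cplus (x k) (y k)) <= 2 * Nw w x + 2 * Nw w y.
Proof. intros. apply Ew_comb; auto. intro; apply Cmod_add_le. Qed.

Lemma Cmod_le_Nw w x k : (1 <= w k) -> Ew w x -> Cmod (x k) <= sqrt (Nw w x).
Proof.
  intros H1 H. pose proof (Ew_single w x k H).
  rewrite <- (sqrt_pow2 (Cmod (x k))) by apply Cmod_ge_0.
  apply sqrt_le_1_alt. eapply Rle_trans; [|exact H0].
  pose proof (Cmod_ge_0 (x k)). rewrite Rpow_mult_distr.
  assert (1 <= w k ^ 2) by (apply pow_R1_Rle; auto). nra.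
Qed.

Definition invLm b m := fun k => / Lm b m k.

Lemma EN_Ew b m x : EN b m x <-> Ew (invLm b m) x.
Proof.
  unfold EN, Ew, invLm. split; apply ex_sumZ_ext; intro k; unfold Rdiv; ring.
Qed.
Lemma NN_Nw b m x : NN b m x = Nw (invLm b m) x.
Proof. unfold NN, Nw, invLm. apply sumZ_ext; intro k; unfold Rdiv; ring. Qed.

Lemma invLm_nn b m k : 0 <= invLm b m k.
Proof. unfold invLm. left; apply Rinv_0_lt_compat, Lm_pos. Qed.
Lemma Lm_nn b m k : 0 <= Lm b m k.
Proof. left; apply Lm_pos. Qed.

Lemma conv_sub2 W x y k : exC (fun j => Cmult (W j) (x (k - j)%Z)) -> exC (fun j => Cmult (W j) (y (k - j)%Z)) ->
  conv W (fun i => Cminus (x i) (y i)) k = Cminus (conv W x k) (conv W y k).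
Proof.
  intros Hx Hy. unfold conv, Cminus.
  assert (Hy' : exC (fun j => Copp (Cmult (W j) (y (k - j)%Z)))).
  { unfold exC. apply (ex_sumZ_ext (fun j => Cmod (Cmult (W j) (y (k - j)%Z)))); auto. intro; rewrite Cmod_opp; auto. }
  rewrite <- sumZC_opp, <- (sumZC_plus _ _ Hx Hy').
  f_equal. apply functional_extensionality. intro j.
  apply injective_projections; simpl; ring.
Qed.

Lemma conv_add2 W x y k : exC (fun j => Cmult (W j) (x (k - j)%Z)) -> exC (fun j => Cmult (W j) (y (k - j)%Z)) ->
  conv W (fun i => Cplus (x i) (y i)) k = Cplus (conv W x k) (conv W y k).
Proof.
  intros Hx Hy. unfold conv. rewrite <- (sumZC_plus _ _ Hx Hy).
  f_equal. apply functional_extensionality. intro j.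
  apply injective_projections; simpl; ring.
Qed.

Lemma conv_sub1 W1 W2 x k : exC (fun j => Cmult (W1 j) (x (k - j)%Z)) -> exC (fun j => Cmult (W2 j) (x (k - j)%Z)) ->
  conv (fun j => Cminus (W1 j) (W2 j)) x k = Cminus (conv W1 x k) (conv W2 x k).
Proof.
  intros Hx Hy. unfold conv, Cminus.
  assert (Hy' : exC (fun j => Copp (Cmult (W2 j) (x (k - j)%Z)))).
  { unfold exC. apply (ex_sumZ_ext (fun j => Cmod (Cmult (W2 j) (x (k - j)%Z)))); auto. intro; rewrite Cmod_opp; auto. }
  rewrite <- sumZC_opp, <- (sumZC_plus _ _ Hx Hy').
  f_equal. apply functional_extensionality. intro j.
  apply injective_projections; simpl; ring.
Qed.

Lemma conv_add1 W1 W2 x k : exC (fun j => Cmult (W1 j) (x (k - j)%Z)) -> exC (fun j => Cmult (W2 j) (x (k - j)%Z)) ->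
  conv (fun j => Cplus (W1 j) (W2 j)) x k = Cplus (conv W1 x k) (conv W2 x k).
Proof.
  intros Hx Hy. unfold conv. rewrite <- (sumZC_plus _ _ Hx Hy).
  f_equal. apply functional_extensionality. intro j.
  apply injective_projections; simpl; ring.
Qed.


Lemma pow2m (x : R) (m : nat) : x ^ (2 * m) = (x ^ 2) ^ m.
Proof. rewrite pow_mult. reflexivity. Qed.

Lemma symb_nn b m k : 0 <= symb b m k.
Proof. unfold symb. rewrite pow2m. apply pow_le. apply pow2_ge_0. Qed.

Lemma weight_symb b m k lam : 1 <= lam -> Lm b m k ^ 2 <= 4 ^ m * (symb b m k + lam).
Proof.
  intro Hl. unfold Lm, symb, ell, jbr.
  set (v := freq b k).
  rewrite <- pow_mult, Nat.mul_comm, pow_mult, pow2m.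
  assert (H1 : (1 + Rabs v) ^ 2 <= 2 * (1 + v ^ 2)).
  { rewrite <- (pow2_abs v). pose proof (Rabs_pos v). assert (0 <= (1 - Rabs v)^2) by apply pow2_ge_0. nra. }
  assert (H2 : ((1 + Rabs v) ^ 2) ^ m <= (2 * (1 + v ^ 2)) ^ m) by (apply pow_incr; split; [apply pow2_ge_0|auto]).
  rewrite Rpow_mult_distr in H2.
  pose proof (pow_split 1 (v ^ 2) 1 m ltac:(lra) (pow2_ge_0 v) ltac:(lra)).
  rewrite ?Rmult_1_l, ?pow1, ?Rmult_1_l in H.
  assert (H3 : (v ^ 2) ^ m <= ((v * PI) ^ 2) ^ m).
  { apply pow_incr. split. apply pow2_ge_0. rewrite Rpow_mult_distr.
    pose proof PI2_1. pose proof (pow2_ge_0 v). assert (1 <= PI ^ 2) by nra. nra. }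
  assert (0 <= 2 ^ m) by (apply pow_le; lra).
  replace (4 ^ m) with (2 ^ m * 2 ^ m) by (rewrite <- Rpow_mult_distr; f_equal; lra).
  assert (2 ^ m * (1 + v ^ 2) ^ m <= 2 ^ m * (2 ^ m * (1 + ((v * PI) ^ 2) ^ m))).
  { apply Rmult_le_compat_l; auto. eapply Rle_trans. exact H. apply Rmult_le_compat_l; auto. lra. }
  assert (0 <= 2 ^ m * 2 ^ m) by (apply Rmult_le_pos; auto). nra.
Qed.

Definition sg b m lam k := symb b m k + lam.
Definition li b m lam (d : Z -> C) : Z -> C := fun k => Cmult (RtoC (/ sg b m lam k)) (d k).
Definition onew : Z -> R := fun _ => 1.

Lemma sg_ge b m lam k : 1 <= lam -> lam <= sg b m lam k.
Proof. intro. unfold sg. pose proof (symb_nn b m k). lra. Qed.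

Lemma Cmod_li b m lam d k : 1 <= lam -> Cmod (li b m lam d k) = Cmod (d k) / sg b m lam k.
Proof.
  intro H. unfold li. rewrite Cmod_mult, Cmod_R. pose proof (sg_ge b m lam k H).
  rewrite Rabs_pos_eq. unfold Rdiv; ring. left; apply Rinv_0_lt_compat; lra.
Qed.

Lemma F1 b m lam d : 1 <= lam -> Ew (invLm b m) d ->
  Ew (Lm b m) (li b m lam d) /\ Nw (Lm b m) (li b m lam d) <= 16 ^ m * Nw (invLm b m) d.
Proof.
  intros Hl Hd. apply Ew_le; auto. apply pow_le; lra.
  intro k. rewrite Cmod_li by auto. unfold invLm.
  pose proof (weight_symb b m k lam Hl). pose proof (sg_ge b m lam k Hl).
  pose proof (Lm_pos b m k). pose proof (Cmod_ge_0 (d k)).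
  set (L := Lm b m k) in *. set (s := sg b m lam k) in *. set (c := Cmod (d k)) in *.
  unfold sg in H. fold s in H.
  replace ((L * (c / s)) ^ 2) with ((L ^ 2 / s) ^ 2 * (/ L * c) ^ 2) by (field; lra).
  apply Rmult_le_compat_r. apply pow2_ge_0.
  replace (16 ^ m) with ((4 ^ m) ^ 2) by (rewrite <- pow_mult, Nat.mul_comm, pow_mult; f_equal; lra).
  apply pow_incr. split. apply Rdiv_le_0_compat. apply pow2_ge_0. lra.
  apply Rmult_le_reg_r with s. lra. replace (L ^ 2 / s * s) with (L ^ 2) by (field; lra). exact H.
Qed.

Lemma F2 b m lam y : 1 <= lam -> Ew onew y ->
  Ew (Lm b m) (li b m lam y) /\ Nw (Lm b m) (li b m lam y) <= (4 ^ m / lam) * Nw onew y.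
Proof.
  intros Hl Hy. apply Ew_le; auto. apply Rdiv_le_0_compat. apply pow_le; lra. lra.
  intro k. rewrite Cmod_li by auto. unfold onew.
  pose proof (weight_symb b m k lam Hl). pose proof (sg_ge b m lam k Hl).
  pose proof (Lm_pos b m k). pose proof (Cmod_ge_0 (y k)).
  set (L := Lm b m k) in *. set (s := sg b m lam k) in *. set (c := Cmod (y k)) in *.
  unfold sg in H. fold s in H.
  replace ((L * (c / s)) ^ 2) with ((L ^ 2 / s) / s * c ^ 2) by (field; lra).
  replace (1 * c) with c by ring.
  apply Rmult_le_compat_r. apply pow2_ge_0.
  assert (L ^ 2 / s <= 4 ^ m).
  { apply Rmult_le_reg_r with s. lra. replace (L ^ 2 / s * s) with (L ^ 2) by (field; lra). exact H. }
  assert (0 <= 4 ^ m) by (apply pow_le; lra).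
  unfold Rdiv. apply Rmult_le_compat; auto. apply Rdiv_le_0_compat. apply pow2_ge_0. lra.
  left; apply Rinv_0_lt_compat; lra. apply Rinv_le_contravar; lra.
Qed.


Lemma conv_l1 p q : nn p -> nn q -> ex_sumZ p -> ex_sumZ (fun i => q i ^ 2) ->
  (forall k, ex_sumZ (fun j => p j * q (k - j)%Z)) /\
  ex_sumZ (fun k => sumZ (fun j => p j * q (k - j)%Z) ^ 2) /\
  sumZ (fun k => sumZ (fun j => p j * q (k - j)%Z) ^ 2) <= sumZ p ^ 2 * sumZ (fun i => q i ^ 2).
Proof.
  intros Hp Hq Ep Eq.
  set (Q := sumZ (fun i => q i ^ 2)). set (P1 := sumZ p).
  assert (HQ0 : 0 <= Q) by (apply sumZ_nonneg; auto; intro; apply pow2_ge_0).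
  assert (HP0 : 0 <= P1) by (apply sumZ_nonneg; auto).
  assert (Hsq : forall i, q i ^ 2 <= Q) by (intro i; apply (sumZ_single (fun i => q i ^ 2)); auto; intro; apply pow2_ge_0).
  assert (EG : forall k, ex_sumZ (fun j => q (k - j)%Z ^ 2 * p j)).
  { intro k. destruct (sumZ_scal Q _ Ep) as [E _].
    apply (sumZ_le _ (fun j => Q * p j)); auto.
    intro j. apply Rmult_le_pos; auto. apply pow2_ge_0.
    intro j. apply Rmult_le_compat_r; auto. }
  assert (HS : forall k, ex_sumZ (fun j => p j * q (k - j)%Z) /\
     sumZ (fun j => p j * q (k - j)%Z) ^ 2 <= sumZ (fun j => q (k - j)%Z ^ 2 * p j) * P1).
  { intro k. destruct (CSw (fun j => q (k - j)%Z) p (fun j => Hq _) Hp (EG k) Ep) as [E S].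
    rewrite (sumZ_ext (fun j => q (k - j)%Z * p j) (fun j => p j * q (k - j)%Z)) in S by (intro; ring).
    split; auto. apply (ex_sumZ_ext (fun j => q (k - j)%Z * p j)); auto. intro; ring. }
  set (F := fun j k => q (k - j)%Z ^ 2 * p j).
  assert (HFnn : forall j k, 0 <= F j k) by (intros; unfold F; apply Rmult_le_pos; [apply pow2_ge_0|auto]).
  assert (HFj : forall j, ex_sumZ (F j) /\ sumZ (F j) <= Q * p j).
  { intro j. destruct (sumZ_inj (fun i => q i ^ 2) (fun k => (k - j)%Z) (fun _ => pow2_ge_0 _) Eq (shift_inj2 j)) as [E1 S1].
    destruct (sumZ_scal (p j) _ E1) as [E2 S2].
    unfold F. split.
    - apply (ex_sumZ_ext (fun k => p j * q (k - j)%Z ^ 2)); auto. intro; ring.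
    - rewrite (sumZ_ext _ (fun k => p j * q (k - j)%Z ^ 2)) by (intro; ring).
      rewrite S2. rewrite Rmult_comm. apply Rmult_le_compat_r; auto. }
  destruct (sumZ_scal Q _ Ep) as [EQ SQ].
  destruct (sumZ_le (fun j => sumZ (F j)) (fun j => Q * p j)) as [EF SF].
  { intro j. apply sumZ_nonneg. intro; auto. apply HFj. }
  { intro j. apply HFj. }
  { exact EQ. }
  destruct (tonelli F HFnn (fun j => proj1 (HFj j)) EF) as [_ [EGs SGs]].
  unfold F in EGs, SGs.
  destruct (sumZ_scal P1 _ EGs) as [Eh Sh].
  assert (HT : forall k, sumZ (fun j => p j * q (k - j)%Z) ^ 2 <= P1 * sumZ (fun j => q (k - j)%Z ^ 2 * p j)).
  { intro k. rewrite Rmult_comm. apply HS. }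
  destruct (sumZ_le _ _ (fun k => pow2_ge_0 _) HT Eh) as [ET ST].
  split. intro k; apply HS. split; auto.
  eapply Rle_trans. exact ST. rewrite Sh.
  assert (sumZ (fun k => sumZ (fun j => q (k - j)%Z ^ 2 * p j)) <= Q * P1).
  { eapply Rle_trans. exact SGs. eapply Rle_trans. exact SF. rewrite SQ. unfold P1. lra. }
  replace (P1 ^ 2 * Q) with (P1 * (Q * P1)) by ring. apply Rmult_le_compat_l; auto.
Qed.

Lemma conv_l1C (Wl x : Z -> C) : ex_sumZ (fun j => Cmod (Wl j)) -> Ew onew x ->
  (forall k, exC (fun j => Cmult (Wl j) (x (k - j)%Z))) /\
  Ew onew (conv Wl x) /\ Nw onew (conv Wl x) <= 4 * sumZ (fun j => Cmod (Wl j)) ^ 2 * Nw onew x.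
Proof.
  intros HW Hx.
  assert (Hx' : ex_sumZ (fun i => Cmod (x i) ^ 2)).
  { apply (ex_sumZ_ext (fun k => (onew k * Cmod (x k)) ^ 2)); auto. intro; unfold onew; ring. }
  destruct (conv_l1 (fun j => Cmod (Wl j)) (fun i => Cmod (x i)) (fun _ => Cmod_ge_0 _) (fun _ => Cmod_ge_0 _) HW Hx')
    as [E1 [E2 S2]].
  assert (Hex : forall k, exC (fun j => Cmult (Wl j) (x (k - j)%Z))).
  { intro k. apply (exC_le _ (fun j => Cmod (Wl j) * Cmod (x (k - j)%Z)) (fun j => Rmult_le_pos _ _ (Cmod_ge_0 _) (Cmod_ge_0 _))).
    intro j. rewrite Cmod_mult. lra. apply E1. }
  assert (Hpt : forall k, (onew k * Cmod (conv Wl x k)) ^ 2 <= 4 * sumZ (fun j => Cmod (Wl j) * Cmod (x (k - j)%Z)) ^ 2).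
  { intro k. unfold conv, onew. pose proof (sumZC_bound _ (Hex k)). cbv beta in H.
    rewrite (sumZ_ext (fun j => Cmod (Cmult (Wl j) (x (k - j)%Z))) (fun j => Cmod (Wl j) * Cmod (x (k - j)%Z))) in H
      by (intro; apply Cmod_mult).
    pose proof (Cmod_ge_0 (sumZC (fun j => Cmult (Wl j) (x (k - j)%Z)))).
    replace (4 * sumZ (fun j => Cmod (Wl j) * Cmod (x (k - j)%Z)) ^ 2) with
      ((2 * sumZ (fun j => Cmod (Wl j) * Cmod (x (k - j)%Z))) ^ 2) by ring.
    apply pow_incr. lra. }
  destruct (sumZ_scal 4 _ E2) as [E3 S3].
  destruct (sumZ_le _ _ (fun k => pow2_ge_0 _) Hpt E3) as [E4 S4].
  split; auto. split; auto. unfold Nw at 1. eapply Rle_trans. exact S4. rewrite S3.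
  unfold Nw, onew. rewrite (sumZ_ext (fun k => (1 * Cmod (x k)) ^ 2) (fun i => Cmod (x i) ^ 2)) by (intro; ring).
  lra.
Qed.


Definition WL (J : nat) (W : Z -> C) : Z -> C :=
  fun j => if Z_le_dec (Z.abs j) (Z.of_nat J) then W j else RtoC 0.
Definition WH (J : nat) (W : Z -> C) : Z -> C :=
  fun j => if Z_le_dec (Z.abs j) (Z.of_nat J) then RtoC 0 else W j.

Lemma W_split J W : W = (fun j => Cplus (WL J W j) (WH J W j)).
Proof.
  apply functional_extensionality; intro j. unfold WL, WH.
  destruct (Z_le_dec _ _); apply injective_projections; simpl; ring.
Qed.

Lemma Cmod_WL J W j : Cmod (WL J W j) <= Cmod (W j).
Proof. unfold WL. destruct (Z_le_dec _ _). lra. rewrite Cmod_R, Rabs_R0. apply Cmod_ge_0. Qed.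
Lemma Cmod_WH J W j : Cmod (WH J W j) <= Cmod (W j).
Proof. unfold WH. destruct (Z_le_dec _ _). rewrite Cmod_R, Rabs_R0. apply Cmod_ge_0. lra. Qed.

Lemma EN_le b m W V : EN b m V -> (forall j, Cmod (W j) <= Cmod (V j)) -> EN b m W /\ NN b m W <= NN b m V.
Proof.
  intros HV H. apply sumZ_le; auto. intro; apply pow2_ge_0.
  intro j. apply pow_incr. split. apply Rdiv_le_0_compat. apply Cmod_ge_0. apply Lm_pos.
  unfold Rdiv. apply Rmult_le_compat_r. left; apply Rinv_0_lt_compat, Lm_pos. auto.
Qed.

Definition KJ (J m : nat) : R := (1 + 2 * INR J) ^ (S m).

Lemma ell_true_le J j : (Z.abs j <= Z.of_nat J)%Z -> ell true j <= 1 + 2 * INR J.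
Proof.
  intro H. unfold ell, jbr, freq. apply Rplus_le_compat_l. rewrite Rabs_Zabs, INR_IZR_INZ.
  rewrite <- mult_IZR. apply IZR_le. lia.
Qed.

Lemma WL_l1 m J W : (1 <= m)%nat -> EN true m W ->
  ex_sumZ (fun j => Cmod (WL J W j)) /\ sumZ (fun j => Cmod (WL J W j)) ^ 2 <= KJ J m ^ 2 * 4 * NN true m W.
Proof.
  intros hm HW.
  set (x := fun j => Cmod (W j) / Lm true m j).
  set (y := fun j => / ell true j).
  assert (Hx : nn x) by (intro j; unfold x; apply Rdiv_le_0_compat; [apply Cmod_ge_0|apply Lm_pos]).
  assert (Hy : nn y) by (intro j; unfold y; left; apply Rinv_0_lt_compat; pose proof (ell_ge1 true j); lra).
  assert (Hy2 : forall j, y j ^ 2 <= zw j).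
  { intro j. unfold y, zw. rewrite pow_inv. apply Rinv_le_contravar. apply pow_lt. pose proof (Rabs_pos (IZR j)); lra.
    apply pow_incr. split. pose proof (Rabs_pos (IZR j)); lra. apply ell_lower. }
  destruct (sumZ_le _ _ (fun j => pow2_ge_0 (y j)) Hy2 zw_ex) as [Ey Sy].
  destruct (CS2 x y Hx Hy HW Ey) as [Exy Sxy].
  assert (HK : 0 <= KJ J m) by (unfold KJ; apply pow_le; pose proof (pos_INR J); lra).
  assert (Hpt : forall j, Cmod (WL J W j) <= KJ J m * (x j * y j)).
  { intro j. unfold WL. destruct (Z_le_dec _ _) as [Hj|Hj].
    - pose proof (ell_true_le J j Hj). pose proof (ell_ge1 true j).
      unfold x, y, Lm, KJ. pose proof (Cmod_ge_0 (W j)).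
      set (e := ell true j) in *. set (c := Cmod (W j)). set (K := 1 + 2 * INR J) in *.
      assert (0 < e ^ m) by (apply pow_lt; lra).
      assert (e ^ S m <= K ^ S m) by (apply pow_incr; lra).
      replace (K ^ S m * (c / e ^ m * / e)) with (c * (K ^ S m / e ^ S m)) by (simpl; field; lra).
      rewrite <- (Rmult_1_r c) at 1. apply Rmult_le_compat_l. apply Cmod_ge_0.
      assert (0 < e ^ S m) by (apply pow_lt; lra).
      apply Rmult_le_reg_r with (e ^ S m); auto. field_simplify; lra.
    - rewrite Cmod_R, Rabs_R0. apply Rmult_le_pos; auto. apply Rmult_le_pos; auto. }
  destruct (sumZ_scal (KJ J m) _ Exy) as [E1 S1].
  destruct (sumZ_le _ _ (fun j => Cmod_ge_0 _) Hpt E1) as [E2 S2].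
  split; auto. rewrite S1 in S2.
  assert (0 <= sumZ (fun j => Cmod (WL J W j))) by (apply sumZ_nonneg; auto; intro; apply Cmod_ge_0).
  assert (sumZ (fun j => Cmod (WL J W j)) ^ 2 <= (KJ J m * sumZ (fun j => x j * y j)) ^ 2) by (apply pow_incr; lra).
  eapply Rle_trans. exact H0. rewrite Rpow_mult_distr.
  replace (KJ J m ^ 2 * 4 * NN true m W) with (KJ J m ^ 2 * (NN true m W * 4)) by ring.
  apply Rmult_le_compat_l. apply pow2_ge_0.
  eapply Rle_trans. exact Sxy. apply Rmult_le_compat_l.
  apply sumZ_nonneg; auto. intro; apply pow2_ge_0.
  pose proof zw_sum. lra.
Qed.

Definition Good b m W J lam :=
  EN true m W /\ 1 <= lam /\ 2 * 16 ^ m * Kc b m * NN true m (WH J W) <= 1 / 16 /\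
  2 * (4 ^ m / lam) * 4 * (KJ J m ^ 2 * 4 * NN true m W) <= 1 / 16.

Lemma li_add b m lam x y k : li b m lam (fun i => Cplus (x i) (y i)) k = Cplus (li b m lam x k) (li b m lam y k).
Proof. unfold li. apply injective_projections; simpl; ring. Qed.
Lemma li_sub b m lam x y k : li b m lam (fun i => Cminus (x i) (y i)) k = Cminus (li b m lam x k) (li b m lam y k).
Proof. unfold li. apply injective_projections; simpl; ring. Qed.

Lemma Ew_ext w x y : (forall k, x k = y k) -> Ew w x -> Ew w y /\ Nw w y = Nw w x.
Proof.
  intros H E. replace y with x by (apply functional_extensionality; auto). auto.
Qed.

Lemma N0_le_NP b m x : Ew (Lm b m) x -> Ew onew x /\ Nw onew x <= Nw (Lm b m) x.
Proof.
  intro H. pose proof (Ew_le onew (Lm b m) x x 1 ltac:(lra) H). rewrite Rmult_1_l in H0. apply H0.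
  intro k. unfold onew. rewrite Rmult_1_l, !Rpow_mult_distr. pose proof (Lm_ge1 b m k).
  assert (1 <= Lm b m k ^ 2) by (apply pow_R1_Rle; auto). pose proof (pow2_ge_0 (Cmod (x k))). nra.
Qed.

Lemma contraction b m (hm : (1 <= m)%nat) W J lam x : Good b m W J lam -> Ew (Lm b m) x ->
  (forall k, exC (fun j => Cmult (W j) (x (k - j)%Z))) /\
  Ew (Lm b m) (li b m lam (conv W x)) /\
  Nw (Lm b m) (li b m lam (conv W x)) <= 1 / 8 * Nw (Lm b m) x.
Proof.
  intros [HW [Hl [HH HLw]]] Hx.
  destruct (conv_est b m hm W x HW Hx) as [ExW _].
  destruct (EN_le true m (WH J W) W HW (Cmod_WH J W)) as [EWH _].
  destruct (conv_est b m hm (WH J W) x EWH Hx) as [ExH [EcH ScH]].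
  destruct (WL_l1 m J W hm HW) as [El1 Sl1].
  destruct (N0_le_NP b m x Hx) as [Ex0 Sx0].
  destruct (conv_l1C (WL J W) x El1 Ex0) as [ExL [EcL ScL]].
  assert (Hsplit : forall k, conv W x k = Cplus (conv (WL J W) x k) (conv (WH J W) x k)).
  { intro k. rewrite <- conv_add1 by auto. rewrite <- W_split. reflexivity. }
  destruct (F2 b m lam _ Hl EcL) as [E2 S2].
  apply EN_Ew in EcH. rewrite NN_Nw in ScH.
  destruct (F1 b m lam _ Hl EcH) as [E1 S1].
  destruct (Ew_add (Lm b m) _ _ (Lm_nn b m) E2 E1) as [E3 S3].
  assert (Hext : forall k, Cplus (li b m lam (conv (WL J W) x) k) (li b m lam (conv (WH J W) x) k) = li b m lam (conv W x) k).
  { intro k. rewrite <- li_add. unfold li. rewrite Hsplit. reflexivity. }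
  destruct (Ew_ext _ _ _ Hext E3) as [E4 S4].
  split; auto. split; auto. rewrite S4.
  set (X := Nw (Lm b m) x) in *.
  assert (HX : 0 <= X) by (apply Nw_nonneg; auto).
  assert (Hx0 : 0 <= Nw onew x) by (apply Nw_nonneg; auto).
  assert (HNW : 0 <= NN true m W) by (apply sumZ_nonneg; auto; intro; apply pow2_ge_0).
  assert (HNH : 0 <= NN true m (WH J W)) by (apply sumZ_nonneg; auto; intro; apply pow2_ge_0).
  assert (HKc : 0 <= Kc b m) by (apply Kc_nn; auto).
  assert (H4 : 0 <= 4 ^ m / lam) by (apply Rdiv_le_0_compat; [apply pow_le; lra|lra]).
  assert (H16 : 0 <= 16 ^ m) by (apply pow_le; lra).
  assert (A1 : Nw (Lm b m) (li b m lam (conv (WL J W) x)) <= (4 ^ m / lam) * 4 * (KJ J m ^ 2 * 4 * NN true m W) * X).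
  { assert (C1 : Nw onew (conv (WL J W) x) <= 4 * (KJ J m ^ 2 * 4 * NN true m W) * X).
    { eapply Rle_trans. exact ScL.
      replace (4 * sumZ (fun j : Z => Cmod (WL J W j)) ^ 2 * Nw onew x) with (4 * (sumZ (fun j : Z => Cmod (WL J W j)) ^ 2 * Nw onew x)) by ring.
      replace (4 * (KJ J m ^ 2 * 4 * NN true m W) * X) with (4 * ((KJ J m ^ 2 * 4 * NN true m W) * X)) by ring.
      apply Rmult_le_compat_l. lra.
      apply Rmult_le_compat; auto. apply pow2_ge_0. }
    eapply Rle_trans. exact S2. replace (4 ^ m / lam * 4 * (KJ J m ^ 2 * 4 * NN true m W) * X) with
      (4 ^ m / lam * (4 * (KJ J m ^ 2 * 4 * NN true m W) * X)) by ring.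
    apply Rmult_le_compat_l; auto. }
  assert (A2 : Nw (Lm b m) (li b m lam (conv (WH J W) x)) <= 16 ^ m * Kc b m * NN true m (WH J W) * X).
  { eapply Rle_trans. exact S1. replace (16 ^ m * Kc b m * NN true m (WH J W) * X) with
      (16 ^ m * (Kc b m * NN true m (WH J W) * X)) by ring.
    apply Rmult_le_compat_l; auto. }
  assert (B1 : 2 * ((4 ^ m / lam) * 4 * (KJ J m ^ 2 * 4 * NN true m W)) * X <= 1/16 * X) by (apply Rmult_le_compat_r; lra).
  assert (B2 : 2 * (16 ^ m * Kc b m * NN true m (WH J W)) * X <= 1/16 * X) by (apply Rmult_le_compat_r; lra).
  lra.
Qed.


Definition r8 (n : nat) : R := (1 / 8) ^ n.

Lemma r8_nn n : 0 <= r8 n.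
Proof. unfold r8. apply pow_le. lra. Qed.

Lemma r8_S n : r8 (S n) = 1 / 8 * r8 n.
Proof. reflexivity. Qed.

Lemma r8_le n p : r8 (n + p) <= r8 p.
Proof.
  unfold r8. rewrite pow_add. pose proof (pow_le (1/8) p ltac:(lra)).
  assert ((1/8) ^ n <= 1) by (clear; induction n; simpl; [lra|nra]). nra.
Qed.

Lemma small_ev K eps : 0 <= K -> 0 < eps -> exists N, forall n, (n >= N)%nat -> sqrt (r8 n * K) < eps.
Proof.
  intros HK He.
  assert (Hy : 0 < eps * eps / (K + 1)) by (apply Rdiv_lt_0_compat; nra).
  destruct (pow_lt_1_zero (1/8) ltac:(rewrite Rabs_pos_eq; lra) _ Hy) as [N HN].
  exists N. intros n Hn. specialize (HN n Hn). rewrite Rabs_pos_eq in HN by (apply pow_le; lra).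
  fold (r8 n) in HN. pose proof (r8_nn n).
  rewrite <- (sqrt_square eps) by lra. apply sqrt_lt_1. nra. nra.
  apply Rle_lt_trans with (eps * eps / (K + 1) * K).
  apply Rmult_le_compat_r; lra.
  replace (eps * eps / (K + 1) * K) with (eps * eps * (K / (K + 1))) by (field; lra).
  assert (K / (K + 1) < 1) by (apply Rmult_lt_reg_r with (K + 1); [lra| field_simplify; lra]).
  assert (0 < eps * eps) by nra. nra.
Qed.

Lemma limit_bound u l n B : Un_cv u l -> (forall n', (n' >= n)%nat -> Rabs (u n' - u n) <= B) -> Rabs (l - u n) <= B.
Proof.
  intros Hc Hb. apply Rnot_lt_le. intro H.
  destruct (Hc (Rabs (l - u n) - B) ltac:(lra)) as [N HN].
  specialize (HN (max N n) ltac:(lia)). specialize (Hb (max N n) ltac:(lia)). unfold Rdist in HN.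
  pose proof (Rabs_triang (l - u (max N n)) (u (max N n) - u n)).
  replace (l - u (max N n) + (u (max N n) - u n)) with (l - u n) in H0 by ring.
  rewrite Rabs_minus_sym in HN. lra.
Qed.

Lemma le_eps a b c : 0 <= c -> (forall e, 0 < e -> e <= 1 -> a <= b + e * c) -> a <= b.
Proof.
  intros Hc H. apply Rnot_lt_le. intro Hab.
  set (e := Rmin 1 ((a - b) / (2 * (c + 1)))).
  assert (He : 0 < e) by (unfold e; apply Rmin_pos; [lra|apply Rdiv_lt_0_compat; lra]).
  assert (He1 : e <= 1) by apply Rmin_l.
  assert (He2 : e <= (a - b) / (2 * (c + 1))) by apply Rmin_r.
  specialize (H e He He1).
  assert (e * c <= (a - b) / (2 * (c + 1)) * c) by (apply Rmult_le_compat_r; lra).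
  assert ((a - b) / (2 * (c + 1)) * c < a - b).
  { apply Rmult_lt_reg_r with (2 * (c + 1)). lra. field_simplify; nra. }
  lra.
Qed.

Lemma Ew_approx w x (y : nat -> Z -> C) M : (forall k, 0 <= w k) ->
  (forall p, Ew w (y p) /\ Nw w (y p) <= M) ->
  (forall e, 0 < e -> exists p, forall k, Cmod (Cminus (x k) (y p k)) <= e) ->
  Ew w x /\ Nw w x <= 2 * M.
Proof.
  intros Hw Hy Happ. apply sumZ_bound. intro; apply pow2_ge_0.
  intro N. set (C := lsum (fun k => 2 * w k ^ 2) (wl N)).
  assert (HC : 0 <= C) by (apply lsum_nonneg; intro k; pose proof (pow2_ge_0 (w k)); lra).
  apply (le_eps _ _ C HC). intros e He He1.
  destruct (Happ e He) as [p Hp].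
  assert (Hpt : forall k, (w k * Cmod (x k)) ^ 2 <= 2 * (w k * Cmod (y p k)) ^ 2 + e * (2 * w k ^ 2)).
  { intro k. specialize (Hp k). specialize (Hw k).
    assert (Cmod (x k) <= Cmod (Cminus (x k) (y p k)) + Cmod (y p k)).
    { replace (x k) with (Cplus (Cminus (x k) (y p k)) (y p k)) at 1 by (apply injective_projections; simpl; ring).
      apply Cmod_triangle. }
    pose proof (Cmod_ge_0 (x k)). pose proof (Cmod_ge_0 (y p k)). pose proof (Cmod_ge_0 (Cminus (x k) (y p k))).
    pose proof (sq_tri (w k * Cmod (x k)) (w k * Cmod (y p k)) (w k * Cmod (Cminus (x k) (y p k)))).
    assert (w k * Cmod (x k) <= w k * Cmod (y p k) + w k * Cmod (Cminus (x k) (y p k))) by nra.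
    assert (HH := H3 ltac:(nra) ltac:(nra) ltac:(nra) H4).
    assert ((w k * Cmod (Cminus (x k) (y p k))) ^ 2 <= w k ^ 2 * e ^ 2).
    { rewrite Rpow_mult_distr. apply Rmult_le_compat_l. apply pow2_ge_0. apply pow_incr. lra. }
    assert (e ^ 2 <= e) by (simpl; nra).
    assert (w k ^ 2 * e ^ 2 <= w k ^ 2 * e) by (apply Rmult_le_compat_l; [apply pow2_ge_0|lra]).
    nra. }
  eapply Rle_trans. apply lsum_le. exact Hpt.
  rewrite lsum_plus. unfold C. rewrite lsum_scal, lsum_scal.
  destruct (Hy p) as [E S].
  pose proof (lsum_wl_le (fun k => (w k * Cmod (y p k)) ^ 2) N (fun _ => pow2_ge_0 _) E).
  unfold Nw in S. lra.
Qed.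

Lemma Cmod_sym a b : Cmod (Cminus a b) = Cmod (Cminus b a).
Proof.
  replace (Cminus b a) with (Copp (Cminus a b)) by (apply injective_projections; simpl; ring).
  rewrite Cmod_opp. reflexivity.
Qed.

Lemma eq_iff (s : R) (z c d : C) : s <> 0 ->
  Cplus (Cmult (RtoC s) z) c = d <-> z = Cminus (Cmult (RtoC (/ s)) d) (Cmult (RtoC (/ s)) c).
Proof.
  intro Hs. split; intro H.
  - rewrite <- H. apply injective_projections; simpl; field; auto.
  - rewrite H. apply injective_projections; simpl; field; auto.
Qed.

Lemma Ew_zero w : Ew w (fun _ => RtoC 0) /\ Nw w (fun _ => RtoC 0) = 0.
Proof.
  unfold Ew, Nw. rewrite (sumZ_ext _ (fun _ => 0)). split. 2: apply sumZ_zero.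
  apply (ex_sumZ_ext (fun _ => 0)). intro; rewrite Cmod_R, Rabs_R0; ring. apply sumZ_zero.
  intro; rewrite Cmod_R, Rabs_R0; ring.
Qed.

Lemma cauchy_of (u : nat -> R) (g : nat -> R) : (forall n p, Rabs (u (n + p)%nat - u n) <= g n) ->
  (forall e, 0 < e -> exists N, g N < e) -> Cauchy_crit u.
Proof.
  intros H Hg e He. destruct (Hg (e / 2) ltac:(lra)) as [N HN]. exists N.
  intros a c Ha Hc. unfold Rdist.
  pose proof (H N (a - N)%nat). pose proof (H N (c - N)%nat).
  replace (N + (a - N))%nat with a in H0 by lia. replace (N + (c - N))%nat with c in H1 by lia.
  replace (u a - u c) with ((u a - u N) - (u c - u N)) by ring.
  eapply Rle_lt_trans. apply Rabs_triang. rewrite Rabs_Ropp. lra.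
Qed.

Lemma Cmod_li_le b m lam y k : 1 <= lam -> Cmod (li b m lam y k) <= Cmod (y k).
Proof.
  intro Hl. rewrite Cmod_li by auto. pose proof (sg_ge b m lam k Hl). pose proof (Cmod_ge_0 (y k)).
  apply Rmult_le_reg_r with (sg b m lam k). lra. field_simplify. nra. lra.
Qed.

Section Solve.
Variables (b : bool) (m : nat) (hm : (1 <= m)%nat) (W : Z -> C) (J : nat) (lam : R).
Hypothesis HG : Good b m W J lam.

Lemma lam_ge : 1 <= lam.
Proof. destruct HG as [_ [H _]]. exact H. Qed.

Lemma EW : EN true m W.
Proof. destruct HG as [H _]. exact H. Qed.

Lemma apriori z d : Ew (Lm b m) z -> Ew (invLm b m) d ->
  (forall k, Cplus (Cmult (RtoC (sg b m lam k)) (z k)) (conv W z k) = d k) ->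
  Nw (Lm b m) z <= 4 * 16 ^ m * Nw (invLm b m) d.
Proof.
  intros Hz Hd Heq.
  pose proof lam_ge as Hl.
  assert (Hfix : forall k, z k = Cminus (li b m lam d k) (li b m lam (conv W z) k)).
  { intro k. apply eq_iff. unfold sg. pose proof (symb_nn b m k). lra. apply Heq. }
  destruct (F1 b m lam d Hl Hd) as [E1 S1].
  destruct (contraction b m hm W J lam z HG Hz) as [_ [E2 S2]].
  destruct (Ew_sub (Lm b m) _ _ (Lm_nn b m) E1 E2) as [E3 S3].
  destruct (Ew_ext _ _ z (fun k => eq_sym (Hfix k)) E3) as [_ S4].
  rewrite <- S4 in S3. pose proof (Nw_nonneg _ _ Hd). pose proof (Nw_nonneg _ _ Hz). lra.
Qed.

Variable d : Z -> C.
Hypothesis Hd : Ew (invLm b m) d.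

Definition Phi (z : Z -> C) : Z -> C := fun k => Cminus (li b m lam d k) (li b m lam (conv W z) k).

Fixpoint it (n : nat) : Z -> C :=
  match n with O => fun _ => RtoC 0 | S n' => Phi (it n') end.

Definition MM := 4 * 16 ^ m * Nw (invLm b m) d.

Lemma MM_nn : 0 <= MM.
Proof. unfold MM. pose proof (Nw_nonneg _ _ Hd). pose proof (pow_le 16 m ltac:(lra)). nra. Qed.

Lemma Phi_Ew z : Ew (Lm b m) z -> Ew (Lm b m) (Phi z) /\ Nw (Lm b m) (Phi z) <= 2 * 16 ^ m * Nw (invLm b m) d + 2 * (1 / 8) * Nw (Lm b m) z.
Proof.
  intro Hz. pose proof lam_ge as Hl.
  destruct (F1 b m lam d Hl Hd) as [E1 S1].
  destruct (contraction b m hm W J lam z HG Hz) as [_ [E2 S2]].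
  destruct (Ew_sub (Lm b m) _ _ (Lm_nn b m) E1 E2) as [E3 S3].
  split. exact E3. unfold Phi. lra.
Qed.

Lemma it_bound n : Ew (Lm b m) (it n) /\ Nw (Lm b m) (it n) <= MM.
Proof.
  pose proof MM_nn.
  induction n as [|n [IH1 IH2]]; simpl.
  - destruct (Ew_zero (Lm b m)) as [E S]. split; auto. rewrite S; auto.
  - destruct (Phi_Ew _ IH1) as [E S]. split; auto. unfold MM in *. lra.
Qed.

Lemma Phi_diff z1 z2 k : Ew (Lm b m) z1 -> Ew (Lm b m) z2 ->
  Cminus (Phi z1 k) (Phi z2 k) = li b m lam (conv W (fun i => Cminus (z2 i) (z1 i))) k.
Proof.
  intros H1 H2.
  destruct (contraction b m hm W J lam z1 HG H1) as [X1 _].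
  destruct (contraction b m hm W J lam z2 HG H2) as [X2 _].
  unfold li. rewrite conv_sub2 by auto. unfold Phi, li.
  apply injective_projections; simpl; ring.
Qed.

Lemma it_diff n p : Ew (Lm b m) (fun k => Cminus (it (n + p) k) (it n k)) /\
  Nw (Lm b m) (fun k => Cminus (it (n + p) k) (it n k)) <= r8 n * MM.
Proof.
  revert p. induction n as [|n IH]; intro p.
  - simpl (0 + p)%nat. destruct (it_bound p) as [E Sb].
    assert (Hext : forall k, it p k = Cminus (it p k) (it 0 k)).
    { intro k. simpl. apply injective_projections; simpl; ring. }
    destruct (Ew_ext _ _ _ Hext E) as [E' S']. split; auto. rewrite S'. unfold r8. simpl. lra.
  - destruct (IH p) as [E Sb].
    destruct (it_bound (n + p)) as [Ea _]. destruct (it_bound n) as [Eb _].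
    destruct (Ew_sub (Lm b m) _ _ (Lm_nn b m) Eb Ea) as [Ex _].
    destruct (contraction b m hm W J lam _ HG Ex) as [_ [E2 S2]].
    assert (Hext : forall k, li b m lam (conv W (fun i => Cminus (it n i) (it (n + p) i))) k =
                              Cminus (it (S n + p) k) (it (S n) k)).
    { intro k. simpl. rewrite Phi_diff; auto. }
    destruct (Ew_ext _ _ _ Hext E2) as [E3 S3]. split; auto. rewrite S3.
    assert (Nw (Lm b m) (fun i => Cminus (it n i) (it (n + p) i)) = Nw (Lm b m) (fun k => Cminus (it (n + p) k) (it n k))).
    { unfold Nw. apply sumZ_ext. intro k. rewrite Cmod_sym. reflexivity. }
    rewrite H in S2. rewrite r8_S. pose proof MM_nn. pose proof (r8_nn n). nra.
Qed.

Definition gg n := sqrt (r8 n * MM).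

Lemma gg_small e : 0 < e -> exists N, forall n, (n >= N)%nat -> gg n < e.
Proof. intro He. apply small_ev; auto. apply MM_nn. Qed.

Lemma it_pt n p k : Cmod (Cminus (it (n + p) k) (it n k)) <= gg n.
Proof.
  destruct (it_diff n p) as [E S].
  eapply Rle_trans. apply (Cmod_le_Nw (Lm b m) (fun k => Cminus (it (n + p) k) (it n k)) k (Lm_ge1 b m k) E).
  apply sqrt_le_1_alt. exact S.
Qed.

Lemma cauchy_re k : Cauchy_crit (fun n => fst (it n k)).
Proof.
  apply (cauchy_of _ gg).
  - intros n p. eapply Rle_trans; [|apply (it_pt n p k)]. apply (re_le_Cmod (Cminus (it (n + p) k) (it n k))).
  - intros e He. destruct (gg_small e He) as [N HN]. exists N. apply HN. lia.
Qed.

Lemma cauchy_im k : Cauchy_crit (fun n => snd (it n k)).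
Proof.
  apply (cauchy_of _ gg).
  - intros n p. eapply Rle_trans; [|apply (it_pt n p k)]. apply (im_le_Cmod (Cminus (it (n + p) k) (it n k))).
  - intros e He. destruct (gg_small e He) as [N HN]. exists N. apply HN. lia.
Qed.

Definition zlim : Z -> C := fun k =>
  (proj1_sig (Rcomplete.R_complete _ (cauchy_re k)), proj1_sig (Rcomplete.R_complete _ (cauchy_im k))).

Lemma zlim_pt n k : Cmod (Cminus (zlim k) (it n k)) <= 2 * gg n.
Proof.
  eapply Rle_trans. apply Cmod_le_ReIm.
  assert (Hre : Rabs (proj1_sig (Rcomplete.R_complete _ (cauchy_re k)) - fst (it n k)) <= gg n).
  { apply (limit_bound (fun n => fst (it n k))). apply (proj2_sig (Rcomplete.R_complete _ (cauchy_re k))).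
    intros n' Hn'. replace n' with (n + (n' - n))%nat by lia.
    eapply Rle_trans; [|apply (it_pt n (n' - n) k)]. apply (re_le_Cmod (Cminus (it (n + (n' - n)) k) (it n k))). }
  assert (Him : Rabs (proj1_sig (Rcomplete.R_complete _ (cauchy_im k)) - snd (it n k)) <= gg n).
  { apply (limit_bound (fun n => snd (it n k))). apply (proj2_sig (Rcomplete.R_complete _ (cauchy_im k))).
    intros n' Hn'. replace n' with (n + (n' - n))%nat by lia.
    eapply Rle_trans; [|apply (it_pt n (n' - n) k)]. apply (im_le_Cmod (Cminus (it (n + (n' - n)) k) (it n k))). }
  unfold zlim, Re, Im. simpl. unfold Rminus in *. lra.
Qed.

Lemma zlim_Ew : Ew (Lm b m) zlim /\ Nw (Lm b m) zlim <= 2 * MM.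
Proof.
  apply (Ew_approx _ _ it MM (Lm_nn b m) it_bound).
  intros e He. destruct (gg_small (e / 2) ltac:(lra)) as [N HN]. exists N. intro k.
  pose proof (zlim_pt N k). specialize (HN N (le_n _)). lra.
Qed.

Lemma zlim_diff n : Ew (Lm b m) (fun k => Cminus (zlim k) (it n k)) /\
  Nw (Lm b m) (fun k => Cminus (zlim k) (it n k)) <= 2 * (r8 n * MM).
Proof.
  apply (Ew_approx _ _ (fun p k => Cminus (it (n + p) k) (it n k)) (r8 n * MM) (Lm_nn b m) (fun p => it_diff n p)).
  intros e He. destruct (gg_small (e / 2) ltac:(lra)) as [N HN]. exists N. intro k.
  replace (Cminus (Cminus (zlim k) (it n k)) (Cminus (it (n + N) k) (it n k))) with (Cminus (zlim k) (it (n + N) k))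
    by (apply injective_projections; simpl; ring).
  pose proof (zlim_pt (n + N) k). specialize (HN (n + N)%nat ltac:(lia)). lra.
Qed.

Lemma zlim_fix k : zlim k = Phi zlim k.
Proof.
  destruct zlim_Ew as [Ez _].
  pose proof lam_ge as Hl.
  pose proof EW as HW.
  set (K := Lm b m k ^ 2 * (Kc b m * NN true m W * (2 * MM))).
  assert (HK : 0 <= K).
  { unfold K. apply Rmult_le_pos. apply pow2_ge_0. apply Rmult_le_pos. apply Rmult_le_pos. apply Kc_nn; auto.
    apply sumZ_nonneg; auto; intro; apply pow2_ge_0. pose proof MM_nn; lra. }
  assert (Hbound : forall n, Cmod (Cminus (zlim k) (Phi zlim k)) <= 2 * gg (S n) + sqrt (r8 n * K)).
  { intro n. destruct (it_bound n) as [En _].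
    destruct (zlim_diff n) as [Ed Sd].
    replace (Cminus (zlim k) (Phi zlim k)) with
      (Cplus (Cminus (zlim k) (it (S n) k)) (Cminus (Phi (it n) k) (Phi zlim k)))
      by (simpl; apply injective_projections; simpl; ring).
    eapply Rle_trans. apply Cmod_triangle. apply Rplus_le_compat. apply zlim_pt.
    rewrite Phi_diff by auto. eapply Rle_trans. apply Cmod_li_le; auto.
    destruct (conv_est b m hm W _ HW Ed) as [_ [Ec Sc]].
    pose proof (sumZ_single (fun k => (Cmod (conv W (fun k0 => Cminus (zlim k0) (it n k0)) k) / Lm b m k) ^ 2) k (fun _ => pow2_ge_0 _) Ec) as Hs. cbv beta in Hs. fold (NN b m (conv W (fun k0 => Cminus (zlim k0) (it n k0)))) in Hs.
    set (c := Cmod (conv W (fun k0 => Cminus (zlim k0) (it n k0)) k)) in *.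
    assert (Hc0 : 0 <= c) by apply Cmod_ge_0.
    pose proof (Lm_pos b m k).
    rewrite <- (sqrt_pow2 c) by auto. apply sqrt_le_1_alt.
    assert (c ^ 2 = Lm b m k ^ 2 * (c / Lm b m k) ^ 2) by (field; lra).
    rewrite H0. unfold K.
    replace (r8 n * (Lm b m k ^ 2 * (Kc b m * NN true m W * (2 * MM)))) with
      (Lm b m k ^ 2 * (Kc b m * NN true m W * (2 * (r8 n * MM)))) by ring.
    apply Rmult_le_compat_l. apply pow2_ge_0.
    eapply Rle_trans. exact Hs. eapply Rle_trans. exact Sc.
    apply Rmult_le_compat_l. apply Rmult_le_pos. apply Kc_nn; auto. apply sumZ_nonneg; auto; intro; apply pow2_ge_0.
    exact Sd. }
  assert (H0 : Cmod (Cminus (zlim k) (Phi zlim k)) = 0).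
  { apply Rle_antisym; [|apply Cmod_ge_0]. apply Rnot_lt_le. intro Hpos.
    set (e := Cmod (Cminus (zlim k) (Phi zlim k))) in *.
    destruct (gg_small (e / 4) ltac:(lra)) as [N1 H1].
    destruct (small_ev K (e / 4) HK ltac:(lra)) as [N2 H2].
    specialize (Hbound (max N1 N2)). specialize (H1 (S (max N1 N2)) ltac:(lia)). specialize (H2 (max N1 N2) ltac:(lia)).
    lra. }
  apply Cmod_eq_0 in H0.
  replace (zlim k) with (Cplus (Cminus (zlim k) (Phi zlim k)) (Phi zlim k)) by (apply injective_projections; simpl; ring).
  rewrite H0. apply injective_projections; simpl; ring.
Qed.

End Solve.

Lemma solve b m (hm : (1 <= m)%nat) W J lam d : Good b m W J lam -> Ew (invLm b m) d ->
  exists z, Ew (Lm b m) z /\ Nw (Lm b m) z <= 8 * 16 ^ m * Nw (invLm b m) d /\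
    forall k, Cplus (Cmult (RtoC (sg b m lam k)) (z k)) (conv W z k) = d k.
Proof.
  intros HG Hd. exists (zlim b m hm W J lam HG d Hd).
  destruct (zlim_Ew b m hm W J lam HG d Hd) as [E S].
  split; auto. split. unfold MM in S. lra.
  intro k. apply eq_iff. unfold sg. pose proof (symb_nn b m k). pose proof (lam_ge b m W J lam HG). lra.
  rewrite (zlim_fix b m hm W J lam HG d Hd k) at 1. reflexivity.
Qed.


Lemma sob_pos b m u : sob_terms b (Z.of_nat m) u = fun k => (Lm b m k * Cmod (u k)) ^ 2.
Proof.
  apply functional_extensionality; intro k. unfold sob_terms, Lm, ell.
  replace (2 * Z.of_nat m)%Z with (Z.of_nat (2 * m)) by lia.
  rewrite <- pow_powerRZ, Rpow_mult_distr, <- pow_mult, Nat.mul_comm. reflexivity.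
Qed.

Lemma sob_neg b m u : sob_terms b (- Z.of_nat m) u = fun k => (invLm b m k * Cmod (u k)) ^ 2.
Proof.
  apply functional_extensionality; intro k. unfold sob_terms, invLm, Lm, ell.
  replace (2 * - Z.of_nat m)%Z with (- Z.of_nat (2 * m))%Z by lia.
  rewrite powerRZ_neg', <- pow_powerRZ, Rpow_mult_distr, pow_inv, <- pow_mult, Nat.mul_comm. reflexivity.
Qed.

Lemma inH_pos b m u : in_H b (Z.of_nat m) u <-> Ew (Lm b m) u.
Proof. unfold in_H, Ew. rewrite sob_pos. tauto. Qed.
Lemma inH_neg b m u : in_H b (- Z.of_nat m) u <-> Ew (invLm b m) u.
Proof. unfold in_H, Ew. rewrite sob_neg. tauto. Qed.
Lemma Hnorm_neg b m u : H_norm b (- Z.of_nat m) u = sqrt (Nw (invLm b m) u).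
Proof. unfold H_norm, Nw. rewrite sob_neg. reflexivity. Qed.

Lemma onew_eq (u : Z -> C) : (fun k => Cmod (u k) ^ 2) = (fun k => (onew k * Cmod (u k)) ^ 2).
Proof. apply functional_extensionality; intro k. unfold onew. ring. Qed.

Lemma inL2 u : in_L2 u <-> Ew onew u.
Proof. unfold in_L2, Ew. rewrite onew_eq. tauto. Qed.

Lemma gnorm u f : graph_norm u f = sqrt (Nw onew u + Nw onew f).
Proof. unfold graph_norm, Nw. rewrite !onew_eq. reflexivity. Qed.

Lemma gdist u f w g : graph_dist u f w g = sqrt (Nw onew (fun k => Cminus (u k) (w k)) + Nw onew (fun k => Cminus (f k) (g k))).
Proof. unfold graph_dist. apply gnorm. Qed.

Lemma onew_nn k : 0 <= onew k. Proof. unfold onew; lra. Qed.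

Lemma gap_step b m (hm : (1 <= m)%nat) W1 W2 J lam u f :
  Good b m W1 J lam -> Good b m W2 J lam -> S_graph b m W1 u f -> Nw onew u + Nw onew f = 1 ->
  exists w g, S_graph b m W2 w g /\
    Nw onew (fun k => Cminus (u k) (w k)) + Nw onew (fun k => Cminus (f k) (g k)) <=
    (1 + lam ^ 2) * (8 * 16 ^ m) * (Kc b m * NN true m (fun j => Cminus (W1 j) (W2 j)) * (4 * 16 ^ m * (2 * (1 + lam ^ 2)))).
Proof.
  intros G1 G2 [Hu [Hf Heq]] Hn.
  apply inH_pos in Hu. apply inL2 in Hf.
  pose proof (lam_ge b m W1 J lam G1) as Hl.
  pose proof (EW b m W1 J lam G1) as HW1. pose proof (EW b m W2 J lam G2) as HW2.
  pose proof (Nw_nonneg _ _ Hf) as Hf0.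
  destruct (N0_le_NP b m u Hu) as [Hu1 Su1].
  pose proof (Nw_nonneg _ _ Hu1) as Hu0.
  set (d := fun k => Cplus (f k) (Cmult (RtoC lam) (u k))).
  assert (Hdpt : forall k, (invLm b m k * Cmod (d k)) ^ 2 <= 2 * (onew k * Cmod (f k)) ^ 2 + 2 * lam ^ 2 * (onew k * Cmod (u k)) ^ 2).
  { intro k. unfold d, onew, invLm. pose proof (Lm_ge1 b m k).
    assert (0 < / Lm b m k <= 1).
    { split. apply Rinv_0_lt_compat; lra. rewrite <- Rinv_1. apply Rinv_le_contravar; lra. }
    pose proof (Cmod_ge_0 (f k)). pose proof (Cmod_ge_0 (u k)). pose proof (Cmod_ge_0 (Cplus (f k) (Cmult (RtoC lam) (u k)))).
    assert (Cmod (Cplus (f k) (Cmult (RtoC lam) (u k))) <= Cmod (f k) + lam * Cmod (u k)).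
    { eapply Rle_trans. apply Cmod_triangle. rewrite Cmod_mult, Cmod_R, Rabs_pos_eq by lra. lra. }
    assert (/ Lm b m k * Cmod (Cplus (f k) (Cmult (RtoC lam) (u k))) <= Cmod (f k) + lam * Cmod (u k)) by nra.
    assert (0 <= / Lm b m k * Cmod (Cplus (f k) (Cmult (RtoC lam) (u k)))) by nra.
    pose proof (sq_tri _ (Cmod (f k)) (lam * Cmod (u k)) H6 H1 ltac:(nra) H5). nra. }
  destruct (sumZ_scal 2 _ Hf) as [Ea Sa].
  destruct (sumZ_scal (2 * lam ^ 2) _ Hu1) as [Eb Sb].
  destruct (sumZ_plus _ _ Ea Eb) as [Ec Sc].
  assert (Hdpt' : forall k, (invLm b m k * Cmod (d k)) ^ 2 <= 2 * (onew k * Cmod (f k)) ^ 2 + 2 * lam ^ 2 * (onew k * Cmod (u k)) ^ 2) by exact Hdpt.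
  destruct (sumZ_le (fun k => (invLm b m k * Cmod (d k)) ^ 2) _ (fun _ => pow2_ge_0 _) Hdpt' Ec) as [Ed Sd].
  fold (Ew (invLm b m) d) in Ed. fold (Nw (invLm b m) d) in Sd.
  rewrite Sc, Sa, Sb in Sd. fold (Nw onew f) (Nw onew u) in Sd.
  assert (Hd : Nw (invLm b m) d <= 2 * (1 + lam ^ 2)).
  { assert (0 <= lam ^ 2) by apply pow2_ge_0. nra. }
  assert (Hequ : forall k, Cplus (Cmult (RtoC (sg b m lam k)) (u k)) (conv W1 u k) = d k).
  { intro k. unfold d. rewrite Heq. unfold sg. apply injective_projections; simpl; ring. }
  pose proof (apriori b m hm W1 J lam G1 u d Hu Ed Hequ) as Hap.
  set (U := 4 * 16 ^ m * (2 * (1 + lam ^ 2))).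
  assert (HU : Nw (Lm b m) u <= U).
  { unfold U. eapply Rle_trans. exact Hap. apply Rmult_le_compat_l. pose proof (pow_le 16 m ltac:(lra)); lra. exact Hd. }
  set (W12 := fun j => Cminus (W1 j) (W2 j)).
  apply EN_Ew in HW1. apply EN_Ew in HW2.
  destruct (Ew_sub (invLm true m) _ _ (invLm_nn true m) HW1 HW2) as [HW12 _].
  apply EN_Ew in HW12. apply EN_Ew in HW1. apply EN_Ew in HW2.
  destruct (conv_est b m hm W12 u HW12 Hu) as [_ [Ee Se]].
  set (e := conv W12 u) in *.
  apply EN_Ew in Ee. rewrite NN_Nw in Se.
  destruct (solve b m hm W2 J lam e G2 Ee) as [z [Hz [Sz Heqz]]].
  destruct (conv_est b m hm W1 u HW1 Hu) as [X1u _].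
  destruct (conv_est b m hm W2 u HW2 Hu) as [X2u _].
  destruct (conv_est b m hm W2 z HW2 Hz) as [X2z _].
  exists (fun k => Cplus (u k) (z k)), (fun k => Cminus (f k) (Cmult (RtoC lam) (z k))).
  destruct (N0_le_NP b m z Hz) as [Hz1 Sz1].
  pose proof (Nw_nonneg _ _ Hz1) as Hz0.
  split; [split; [|split]|].
  - apply inH_pos. apply (Ew_add _ _ _ (Lm_nn b m) Hu Hz).
  - apply inL2.
    destruct (Ew_le onew onew (fun k => Cmult (RtoC lam) (z k)) z (lam ^ 2) (pow2_ge_0 _) Hz1) as [Elz _].
    { intro k. unfold onew. rewrite Cmod_mult, Cmod_R, Rabs_pos_eq by lra. right; ring. }
    apply (Ew_sub _ _ _ onew_nn Hf Elz).
  - intro k. rewrite conv_add2 by auto.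
    specialize (Heqz k). unfold e, W12 in Heqz. rewrite conv_sub1 in Heqz by auto.
    rewrite Heq. unfold sg in Heqz.
    apply injective_projections; [pose proof (f_equal fst Heqz) as H1 | pose proof (f_equal snd Heqz) as H1]; simpl in *; lra.
  - assert (E1 : Nw onew (fun k => Cminus (u k) (Cplus (u k) (z k))) = Nw onew z).
    { unfold Nw. apply sumZ_ext. intro k. f_equal. f_equal.
      replace (Cminus (u k) (Cplus (u k) (z k))) with (Copp (z k)) by (apply injective_projections; simpl; ring).
      apply Cmod_opp. }
    assert (E2 : Nw onew (fun k => Cminus (f k) (Cminus (f k) (Cmult (RtoC lam) (z k)))) = lam ^ 2 * Nw onew z).
    { unfold Nw. rewrite <- (proj2 (sumZ_scal (lam ^ 2) _ Hz1)). apply sumZ_ext. intro k.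
      replace (Cminus (f k) (Cminus (f k) (Cmult (RtoC lam) (z k)))) with (Cmult (RtoC lam) (z k)) by (apply injective_projections; simpl; ring).
      rewrite Cmod_mult, Cmod_R, Rabs_pos_eq by lra. unfold onew. ring. }
    rewrite E1, E2.
    assert (Nw onew z <= 8 * 16 ^ m * (Kc b m * NN true m W12 * U)).
    { eapply Rle_trans. exact Sz1. eapply Rle_trans. exact Sz.
      apply Rmult_le_compat_l. pose proof (pow_le 16 m ltac:(lra)); lra.
      eapply Rle_trans. exact Se. apply Rmult_le_compat_l.
      apply Rmult_le_pos. apply Kc_nn; auto. apply sumZ_nonneg. intro; apply pow2_ge_0. exact HW12.
      exact HU. }
    fold U. pose proof (pow2_ge_0 lam).
    replace (Nw onew z + lam ^ 2 * Nw onew z) with ((1 + lam ^ 2) * Nw onew z) by ring.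
    rewrite Rmult_assoc. apply Rmult_le_compat_l. lra. exact H.
Qed.


Lemma lsum_ext_in f g l : (forall x, In x l -> f x = g x) -> lsum f l = lsum g l.
Proof.
  induction l; simpl; intro H. reflexivity.
  rewrite H by auto. rewrite IHl by auto. reflexivity.
Qed.

Lemma tail_J m V tau : Ew (invLm true m) V -> 0 < tau -> exists J, Ew (invLm true m) (WH J V) /\ Nw (invLm true m) (WH J V) <= tau.
Proof.
  intros HV Ht.
  set (w := invLm true m).
  set (f := fun j => (w j * Cmod (V j)) ^ 2).
  destruct (sumZ_tail f tau (fun _ => pow2_ge_0 _) HV Ht) as [N HN].
  exists N.
  set (fL := fun j => (w j * Cmod (WL N V j)) ^ 2).
  set (fH := fun j => (w j * Cmod (WH N V j)) ^ 2).
  assert (Hsplit : forall j, f j = fL j + fH j).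
  { intro j. unfold f, fL, fH, WL, WH. destruct (Z_le_dec _ _); rewrite Cmod_R, Rabs_R0; ring. }
  assert (HwN : forall j, 0 <= w j) by (intro; apply invLm_nn).
  assert (HfL : forall j, fL j <= f j).
  { intro j. unfold fL, f. apply pow_incr. split. apply Rmult_le_pos; auto; apply Cmod_ge_0.
    apply Rmult_le_compat_l; auto. apply Cmod_WL. }
  assert (HfH : forall j, fH j <= f j).
  { intro j. unfold fH, f. apply pow_incr. split. apply Rmult_le_pos; auto; apply Cmod_ge_0.
    apply Rmult_le_compat_l; auto. apply Cmod_WH. }
  destruct (sumZ_le fL f (fun _ => pow2_ge_0 _) HfL HV) as [EL _].
  destruct (sumZ_le fH f (fun _ => pow2_ge_0 _) HfH HV) as [EH _].
  destruct (sumZ_plus _ _ EL EH) as [_ Sp].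
  rewrite <- (sumZ_ext _ _ Hsplit) in Sp.
  assert (Hl : lsum f (wl N) = lsum fL (wl N)).
  { apply lsum_ext_in. intros x Hx. apply in_wl_abs in Hx. unfold f, fL, WL.
    destruct (Z_le_dec _ _); [reflexivity|lia]. }
  pose proof (lsum_wl_le fL N (fun _ => pow2_ge_0 _) EL).
  split. exact EH. unfold Nw. fold w. fold fH. lra.
Qed.

Lemma good_crit b m (hm : (1 <= m)%nat) W J NV :
  let t0 := 1 / (128 * 16 ^ m * Kc b m + 1) in
  let lam := 1 + 512 * 4 ^ m * KJ J m ^ 2 * (2 * NV + 2) in
  0 <= NV ->
  Ew (invLm true m) W -> Nw (invLm true m) (WH J W) <= 4 * t0 -> Nw (invLm true m) W <= 2 * NV + 2 ->
  Good b m W J lam.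
Proof.
  intros t0 lam HNV HW HH HN.
  pose proof (Kc_nn b m hm) as HKc.
  assert (H16 : 0 <= 16 ^ m) by (apply pow_le; lra).
  assert (H4 : 0 <= 4 ^ m) by (apply pow_le; lra).
  assert (HKJ : 0 <= KJ J m ^ 2) by apply pow2_ge_0.
  set (X := 16 ^ m * Kc b m) in *.
  assert (HX : 0 <= X) by (unfold X; apply Rmult_le_pos; auto).
  set (Y := 4 ^ m * KJ J m ^ 2 * (2 * NV + 2)).
  assert (HY : 0 <= Y) by (unfold Y; apply Rmult_le_pos; [apply Rmult_le_pos|]; lra).
  assert (Hlam : lam = 1 + 512 * Y) by (unfold lam, Y; ring).
  split; [|split; [|split]].
  - apply EN_Ew; auto.
  - rewrite Hlam. lra.
  - rewrite NN_Nw. unfold t0 in HH.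
    assert (2 * 16 ^ m * Kc b m * Nw (invLm true m) (WH J W) <= 2 * X * (4 * (1 / (128 * X + 1)))).
    { unfold X. replace (2 * 16 ^ m * Kc b m * Nw (invLm true m) (WH J W)) with (2 * (16 ^ m * Kc b m) * Nw (invLm true m) (WH J W)) by ring.
      apply Rmult_le_compat_l. fold X. lra. replace (128 * (16 ^ m * Kc b m)) with (128 * 16 ^ m * Kc b m) by ring. exact HH. }
    assert (2 * X * (4 * (1 / (128 * X + 1))) <= 1 / 16).
    { apply Rmult_le_reg_r with (16 * (128 * X + 1)). lra. field_simplify; lra. }
    lra.
  - rewrite NN_Nw.
    assert (0 <= Nw (invLm true m) W) by (apply Nw_nonneg; auto).
    assert (2 * (4 ^ m / lam) * 4 * (KJ J m ^ 2 * 4 * Nw (invLm true m) W) <= 32 * Y / lam).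
    { unfold Y. unfold Rdiv. rewrite Hlam.
      assert (0 < / (1 + 512 * Y)) by (apply Rinv_0_lt_compat; lra).
      assert (4 ^ m * KJ J m ^ 2 * Nw (invLm true m) W <= 4 ^ m * KJ J m ^ 2 * (2 * NV + 2)).
      { apply Rmult_le_compat_l; auto. apply Rmult_le_pos; auto. }
      fold Y. fold Y in H1.
      replace (2 * (4 ^ m * / (1 + 512 * Y)) * 4 * (KJ J m ^ 2 * 4 * Nw (invLm true m) W)) with
        (32 * (4 ^ m * KJ J m ^ 2 * Nw (invLm true m) W) * / (1 + 512 * Y)) by ring.
      apply Rmult_le_compat_r. lra. lra. }
    assert (32 * Y / lam <= 1 / 16).
    { rewrite Hlam. apply Rmult_le_reg_r with (16 * (1 + 512 * Y)). lra. field_simplify; lra. }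
    lra.
Qed.


Lemma norm1 b m V u f : S_graph b m V u f -> graph_norm u f = 1 -> Nw onew u + Nw onew f = 1.
Proof.
  intros [Hu [Hf _]] Hn. rewrite gnorm in Hn.
  apply inH_pos in Hu. apply inL2 in Hf.
  destruct (N0_le_NP b m u Hu) as [Hu1 _].
  pose proof (Nw_nonneg _ _ Hu1). pose proof (Nw_nonneg _ _ Hf).
  rewrite <- (pow2_sqrt (Nw onew u + Nw onew f)) by lra. rewrite Hn. ring.
Qed.

Lemma sqrt_lt_eps x e : 0 <= x -> 0 < e -> x < e ^ 2 -> sqrt x < e.
Proof.
  intros Hx He H. rewrite <- (sqrt_pow2 e) by lra. apply sqrt_lt_1; auto. apply pow2_ge_0.
Qed.

Theorem proposition3 (m : nat) (hm : (1 <= m)%nat)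
  (Vs : nat -> Z -> C) (V : Z -> C)
  (hVs : forall n, in_H true (- Z.of_nat m) (Vs n))
  (hV : in_H true (- Z.of_nat m) V)
  (hlim : is_lim_seq
            (fun n => H_norm true (- Z.of_nat m) (fun k => Cminus (Vs n k) (V k))) 0) :
  forall b : bool, gen_conv (fun n => S_graph b m (Vs n)) (S_graph b m V).
Proof.
  intro b.
  apply inH_neg in hV.
  assert (hVs' : forall n, Ew (invLm true m) (Vs n)) by (intro n; apply inH_neg; auto).
  set (w := invLm true m).
  assert (Hw : forall k, 0 <= w k) by (intro; apply invLm_nn).
  assert (HD : forall n, Ew w (fun k => Cminus (Vs n k) (V k))) by (intro n; apply (Ew_sub _ _ _ Hw (hVs' n) hV)).
  assert (Hconv : forall delta, 0 < delta -> exists N, forall n, (n >= N)%nat -> Nw w (fun k => Cminus (Vs n k) (V k)) < delta).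
  { intros delta Hdel. apply is_lim_seq_spec in hlim.
    destruct (hlim (mkposreal (sqrt delta) (sqrt_lt_R0 _ Hdel))) as [N HN]. exists N. intros n Hn.
    specialize (HN n Hn). simpl in HN. rewrite Rminus_0_r, Hnorm_neg in HN.
    pose proof (Nw_nonneg _ _ (HD n)). fold w in HN.
    rewrite Rabs_pos_eq in HN by apply sqrt_pos.
    apply sqrt_lt_0_alt in HN. exact HN. }
  set (NV := Nw w V).
  assert (HNV : 0 <= NV) by (apply Nw_nonneg; auto).
  pose proof (Kc_nn b m hm) as HKc.
  set (t0 := 1 / (128 * 16 ^ m * Kc b m + 1)).
  assert (Ht0 : 0 < t0).
  { unfold t0. apply Rdiv_lt_0_compat. lra. pose proof (pow_le 16 m ltac:(lra)). nra. }
  destruct (tail_J m V t0 hV Ht0) as [J [EJ SJ]].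
  set (lam := 1 + 512 * 4 ^ m * KJ J m ^ 2 * (2 * NV + 2)).
  assert (GV : Good b m V J lam).
  { apply (good_crit b m hm V J NV HNV hV).
    - fold t0. lra.
    - fold w. fold NV. lra. }
  assert (GVn : forall n, Nw w (fun k => Cminus (Vs n k) (V k)) <= t0 -> Nw w (fun k => Cminus (Vs n k) (V k)) <= 1 ->
     Good b m (Vs n) J lam).
  { intros n H1 H2. apply good_crit; auto.
    - destruct (EN_le true m (WH J (fun k => Cminus (Vs n k) (V k))) (fun k => Cminus (Vs n k) (V k))) as [E3 S3].
      { apply EN_Ew. apply HD. }
      { apply Cmod_WH. }
      apply EN_Ew in E3. rewrite !NN_Nw in S3.
      destruct (Ew_comb w (WH J V) (WH J (fun k => Cminus (Vs n k) (V k))) (WH J (Vs n)) Hw EJ E3) as [_ S4].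
      { intro k. unfold WH. destruct (Z_le_dec _ _).
        - rewrite Cmod_R, Rabs_R0. pose proof (Cmod_ge_0 (RtoC 0)). rewrite Cmod_R, Rabs_R0 in H. lra.
        - replace (Vs n k) with (Cplus (V k) (Cminus (Vs n k) (V k))) at 1 by (apply injective_projections; simpl; ring).
          apply Cmod_triangle. }
      fold w in S3. fold w t0. fold w in SJ. lra.
    - destruct (Ew_comb w V (fun k => Cminus (Vs n k) (V k)) (Vs n) Hw hV (HD n)) as [_ S4].
      { intro k. replace (Vs n k) with (Cplus (V k) (Cminus (Vs n k) (V k))) at 1 by (apply injective_projections; simpl; ring).
        apply Cmod_triangle. }
      fold w. fold NV in S4. lra. }
  intros eps Heps.
  set (U := 4 * 16 ^ m * (2 * (1 + lam ^ 2))).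
  set (Cg := (1 + lam ^ 2) * (8 * 16 ^ m) * Kc b m * U).
  assert (HCg : 0 <= Cg).
  { unfold Cg, U. pose proof (pow2_ge_0 lam). pose proof (pow_le 16 m ltac:(lra)).
    apply Rmult_le_pos; [apply Rmult_le_pos; [apply Rmult_le_pos|]|]; nra. }
  set (delta := Rmin (Rmin t0 1) (eps ^ 2 / (Cg + 1))).
  assert (Hdel : 0 < delta).
  { unfold delta. apply Rmin_pos. apply Rmin_pos; lra. apply Rdiv_lt_0_compat. apply pow_lt; lra. lra. }
  destruct (Hconv delta Hdel) as [N HN]. exists N. intros n Hn.
  specialize (HN n Hn).
  assert (Hd1 : Nw w (fun k => Cminus (Vs n k) (V k)) <= t0).
  { unfold delta in HN. pose proof (Rmin_l (Rmin t0 1) (eps ^ 2 / (Cg + 1))). pose proof (Rmin_l t0 1). lra. }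
  assert (Hd2 : Nw w (fun k => Cminus (Vs n k) (V k)) <= 1).
  { unfold delta in HN. pose proof (Rmin_l (Rmin t0 1) (eps ^ 2 / (Cg + 1))). pose proof (Rmin_r t0 1). lra. }
  assert (Hd3 : Cg * Nw w (fun k => Cminus (Vs n k) (V k)) < eps ^ 2).
  { unfold delta in HN. pose proof (Rmin_r (Rmin t0 1) (eps ^ 2 / (Cg + 1))).
    pose proof (Nw_nonneg _ _ (HD n)).
    assert (Nw w (fun k => Cminus (Vs n k) (V k)) < eps ^ 2 / (Cg + 1)) by lra.
    assert (0 < eps ^ 2) by (apply pow_lt; lra).
    apply Rle_lt_trans with ((Cg + 1) * Nw w (fun k => Cminus (Vs n k) (V k))). nra.
    apply Rmult_lt_reg_r with (/ (Cg + 1)). apply Rinv_0_lt_compat; lra.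
    replace ((Cg + 1) * Nw w (fun k => Cminus (Vs n k) (V k)) * / (Cg + 1)) with (Nw w (fun k => Cminus (Vs n k) (V k))) by (field; lra).
    exact H1. }
  pose proof (GVn n Hd1 Hd2) as Gn.
  assert (Hsym : Nw w (fun k => Cminus (V k) (Vs n k)) = Nw w (fun k => Cminus (Vs n k) (V k))).
  { unfold Nw. apply sumZ_ext. intro k. rewrite Cmod_sym. reflexivity. }
  split.
  - intros u f Hg Hnorm eta Heta.
    destruct (gap_step b m hm (Vs n) V J lam u f Gn GV Hg (norm1 _ _ _ _ _ Hg Hnorm)) as [w' [g [Hg' Hdist]]].
    exists w', g. split; auto. rewrite gdist.
    rewrite NN_Nw in Hdist. fold w in Hdist. fold U in Hdist.
    assert (Hx : 0 <= Nw onew (fun k => Cminus (u k) (w' k)) + Nw onew (fun k => Cminus (f k) (g k))).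
    { destruct Hg as [Hu [Hf _]]. destruct Hg' as [Hu' [Hf' _]].
      apply inH_pos in Hu, Hu'. apply inL2 in Hf, Hf'.
      destruct (N0_le_NP b m u Hu) as [A1 _]. destruct (N0_le_NP b m w' Hu') as [A2 _].
      pose proof (Nw_nonneg _ _ (proj1 (Ew_sub _ _ _ onew_nn A1 A2))).
      pose proof (Nw_nonneg _ _ (proj1 (Ew_sub _ _ _ onew_nn Hf Hf'))). lra. }
    assert (sqrt (Nw onew (fun k => Cminus (u k) (w' k)) + Nw onew (fun k => Cminus (f k) (g k))) < eps).
    { apply sqrt_lt_eps; auto. eapply Rle_lt_trans. exact Hdist. unfold Cg in Hd3.
      replace ((1 + lam ^ 2) * (8 * 16 ^ m) * (Kc b m * Nw w (fun j => Cminus (Vs n j) (V j)) * U)) with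
        ((1 + lam ^ 2) * (8 * 16 ^ m) * Kc b m * U * Nw w (fun k => Cminus (Vs n k) (V k))) by ring.
      exact Hd3. }
    lra.
  - intros u f Hg Hnorm eta Heta.
    destruct (gap_step b m hm V (Vs n) J lam u f GV Gn Hg (norm1 _ _ _ _ _ Hg Hnorm)) as [w' [g [Hg' Hdist]]].
    exists w', g. split; auto. rewrite gdist.
    rewrite NN_Nw in Hdist. fold w in Hdist. fold U in Hdist. rewrite Hsym in Hdist.
    assert (Hx : 0 <= Nw onew (fun k => Cminus (u k) (w' k)) + Nw onew (fun k => Cminus (f k) (g k))).
    { destruct Hg as [Hu [Hf _]]. destruct Hg' as [Hu' [Hf' _]].
      apply inH_pos in Hu, Hu'. apply inL2 in Hf, Hf'.
      destruct (N0_le_NP b m u Hu) as [A1 _]. destruct (N0_le_NP b m w' Hu') as [A2 _].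
      pose proof (Nw_nonneg _ _ (proj1 (Ew_sub _ _ _ onew_nn A1 A2))).
      pose proof (Nw_nonneg _ _ (proj1 (Ew_sub _ _ _ onew_nn Hf Hf'))). lra. }
    assert (sqrt (Nw onew (fun k => Cminus (u k) (w' k)) + Nw onew (fun k => Cminus (f k) (g k))) < eps).
    { apply sqrt_lt_eps; auto. eapply Rle_lt_trans. exact Hdist. unfold Cg in Hd3.
      replace ((1 + lam ^ 2) * (8 * 16 ^ m) * (Kc b m * Nw w (fun j => Cminus (Vs n j) (V j)) * U)) with
        ((1 + lam ^ 2) * (8 * 16 ^ m) * Kc b m * U * Nw w (fun k => Cminus (Vs n k) (V k))) by ring.
      exact Hd3. }
    lra.
Qed.
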